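(* Let $\mathrm{Spin}(7)$ act on the unit sphere $S^7\subset\mathbb{O}$ by $(A,B,B)\cdot x=B(x)$, so that $S^7=\mathrm{Spin}(7)/G_2$ with $G_2$ the isotropy group of $1$. Let $F$ be a $\mathrm{Spin}(7)$-invariant Finsler metric on $S^7$. If some nonzero $X\in\mathrm{Lie}(\mathrm{Spin}(7))$ generates a Killing vector field of constant length for $F$, then $F$ is a symmetric Riemannian metric; more precisely, $F$ is a positive constant multiple of the standard round Riemannian metric on $S^7$.
   Context: $\mathbb{O}$ denotes the Cayley numbers, $\mathbb{O}=\mathbb{H}\oplus\mathbb{H}$ with product $(q_1,q_2)(s_1,s_2)=(q_1s_1-\overline{s_2}q_2,\ s_2q_1+q_2\overline{s_1})$, conjugation $\overline{(q_1,q_2)}=(\overline{q_1},-q_2)$ and inner product $\langle x,y\rangle=\mathrm{Re}(\overline{x}y)$, $\mathrm{Re}(q_1,q_2)=\mathrm{Re}(q_1)$. A triality triple is $(A,B,C)\in\mathrm{SO}(8)^3$ with $A(x)B(y)=C(xy)$ for all $x,y$; these form $\mathrm{Spin}(8)$. $\mathrm{Spin}(7)$ is the subgroup of triples with $B=C$ (equivalently $A(1)=1$), and $G_2$ the subgroup with $A=B=C$ (automorphisms of $\mathbb{O}$). A Killing vector field of constant length is a Killing field $X$ with $F(X_p)$ independent of $p$. Finsler metric: continuous $F:TM\to[0,\infty)$, smooth off the zero section, positive, positively $1$-homogeneous, with positive definite fiberwise Hessian of $F^2/2$. *)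

(* Defs.v *)
From Stdlib Require Import Reals Lra.
Open Scope R_scope.

Record H := mkH { q0 : R; q1 : R; q2 : R; q3 : R }.

Definition Hadd (a b : H) : H :=
  mkH (q0 a + q0 b) (q1 a + q1 b) (q2 a + q2 b) (q3 a + q3 b).
Definition Hopp (a : H) : H := mkH (- q0 a) (- q1 a) (- q2 a) (- q3 a).
Definition Hsub (a b : H) : H := Hadd a (Hopp b).
Definition Hconj (a : H) : H := mkH (q0 a) (- q1 a) (- q2 a) (- q3 a).
(* Hamilton product, basis 1, i, j, k with i j = k *)
Definition Hmul (a b : H) : H :=
  mkH (q0 a * q0 b - q1 a * q1 b - q2 a * q2 b - q3 a * q3 b)
      (q0 a * q1 b + q1 a * q0 b + q2 a * q3 b - q3 a * q2 b)
      (q0 a * q2 b - q1 a * q3 b + q2 a * q0 b + q3 a * q1 b)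
      (q0 a * q3 b + q1 a * q2 b - q2 a * q1 b + q3 a * q0 b).

Definition Oct : Type := (H * H)%type.

Definition Omul (x y : Oct) : Oct :=
  let (a1, a2) := x in let (b1, b2) := y in
  (Hsub (Hmul a1 b1) (Hmul (Hconj b2) a2), Hadd (Hmul b2 a1) (Hmul a2 (Hconj b1))).
Definition Oconj (x : Oct) : Oct := (Hconj (fst x), Hopp (snd x)).
Definition ORe (x : Oct) : R := q0 (fst x).
Definition Oinner (x y : Oct) : R := ORe (Omul (Oconj x) y).
Definition Onorm (x : Oct) : R := sqrt (Oinner x x).

Definition Ocoord (x : Oct) (i : nat) : R :=
  match i with
  | 0%nat => q0 (fst x) | 1%nat => q1 (fst x) | 2%nat => q2 (fst x)
  | 3%nat => q3 (fst x) | 4%nat => q0 (snd x) | 5%nat => q1 (snd x)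
  | 6%nat => q2 (snd x) | 7%nat => q3 (snd x) | _ => 0 end.
Definition Oof (f : nat -> R) : Oct :=
  (mkH (f 0%nat) (f 1%nat) (f 2%nat) (f 3%nat),
   mkH (f 4%nat) (f 5%nat) (f 6%nat) (f 7%nat)).
Definition Ozero : Oct := Oof (fun _ => 0).
Definition Oone : Oct := Oof (fun i => if Nat.eqb i 0 then 1 else 0).
Definition Oadd (x y : Oct) : Oct := Oof (fun i => Ocoord x i + Ocoord y i).
Definition Oscale (r : R) (x : Oct) : Oct := Oof (fun i => r * Ocoord x i).
Definition Osub (x y : Oct) : Oct := Oadd x (Oscale (-1) y).

(* ---------- 8x8 real matrices (entries with indices < 8 are used) ---------- *)
Definition Mat : Type := nat -> nat -> R.
Definition mapp (M : Mat) (x : Oct) : Oct :=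
  Oof (fun i => sum_f_R0 (fun j => M i j * Ocoord x j) 7).
Definition idM : Mat := fun i j => if Nat.eqb i j then 1 else 0.

Definition minor (M : Mat) (j : nat) : Mat :=
  fun r k => M (S r) (if Nat.ltb k j then k else S k).
Fixpoint detn (n : nat) (M : Mat) : R :=
  match n with
  | O => 1
  | S m => sum_f_R0 (fun j => (-1) ^ j * M 0%nat j * detn m (minor M j)) m
  end.

Definition orthM (M : Mat) : Prop :=
  forall i j, (i < 8)%nat -> (j < 8)%nat ->
    sum_f_R0 (fun k => M k i * M k j) 7 = idM i j.
Definition SO8 (M : Mat) : Prop := orthM M /\ detn 8 M = 1.

Record Tri := mkTri { tA : Mat; tB : Mat; tC : Mat }.

Definition Spin8 (g : Tri) : Prop :=
  SO8 (tA g) /\ SO8 (tB g) /\ SO8 (tC g) /\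
  forall x y, Omul (mapp (tA g) x) (mapp (tB g) y) = mapp (tC g) (Omul x y).
Definition Spin7 (g : Tri) : Prop :=
  Spin8 g /\ forall x, mapp (tB g) x = mapp (tC g) x.

(* Lie(Spin(7)): velocities at t = 0 of curves in Spin(7) through the identity
   (Spin(7) being a closed subgroup / embedded submanifold of the triples of
   8x8 matrices, this is its tangent space at the identity). *)
Definition LieSpin7 (X : Tri) : Prop :=
  exists gam : R -> Tri,
    (forall t, Spin7 (gam t)) /\
    (forall i j, (i < 8)%nat -> (j < 8)%nat ->
       tA (gam 0) i j = idM i j /\ tB (gam 0) i j = idM i j /\
       tC (gam 0) i j = idM i j) /\
    (forall i j, (i < 8)%nat -> (j < 8)%nat ->
       derivable_pt_lim (fun t => tA (gam t) i j) 0 (tA X i j) /\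
       derivable_pt_lim (fun t => tB (gam t) i j) 0 (tB X i j) /\
       derivable_pt_lim (fun t => tC (gam t) i j) 0 (tC X i j)).

Definition TriNonzero (X : Tri) : Prop :=
  exists i j, (i < 8)%nat /\ (j < 8)%nat /\
    (tA X i j <> 0 \/ tB X i j <> 0 \/ tC X i j <> 0).

(* Fundamental (Killing) vector field on S^7 of X for the action (A,B,B).x = B(x):
   p |-> d/dt|_{t=0} gam(t).p = X_B p *)
Definition fundField (X : Tri) (p : Oct) : Oct := mapp (tB X) p.

Definition onS7 (p : Oct) : Prop := Oinner p p = 1.
Definition TS7 (p v : Oct) : Prop := onS7 p /\ Oinner p v = 0.

Definition zc (z : Oct * Oct) (i : nat) : R :=
  if Nat.ltb i 8 then Ocoord (fst z) i else Ocoord (snd z) (i - 8).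
Definition dist16 (z z' : Oct * Oct) : R :=
  sqrt (sum_f_R0 (fun i => (zc z i - zc z' i) ^ 2) 15).
Definition zshift (z : Oct * Oct) (i : nat) (t : R) : Oct * Oct :=
  (Oof (fun k => Ocoord (fst z) k + (if Nat.eqb k i then t else 0)),
   Oof (fun k => Ocoord (snd z) k + (if Nat.eqb (k + 8) i then t else 0))).

Definition cont_on (U : Oct * Oct -> Prop) (f : Oct * Oct -> R) : Prop :=
  forall z, U z -> forall eps, 0 < eps -> exists del, 0 < del /\
    forall z', dist16 z z' < del -> Rabs (f z' - f z) < eps.
Fixpoint Ck (k : nat) (U : Oct * Oct -> Prop) (f : Oct * Oct -> R) : Prop :=
  cont_on U f /\
  match k with
  | O => True
  | S m => forall i, (i < 16)%nat -> exists g : Oct * Oct -> R,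
             (forall z, U z -> derivable_pt_lim (fun t => f (zshift z i t)) 0 (g z))
             /\ Ck m U g
  end.
Definition Smooth (U : Oct * Oct -> Prop) (f : Oct * Oct -> R) : Prop :=
  forall k, Ck k U f.

(* Orthogonal projection onto T_p, and the retraction of the open set
   {p <> 0, proj_p v <> 0} of R^16 onto TS^7 minus the zero section. *)
Definition projT (p v : Oct) : Oct := Osub v (Oscale (Oinner v p / Oinner p p) p).
Definition Uoff (z : Oct * Oct) : Prop :=
  fst z <> Ozero /\ projT (fst z) (snd z) <> Ozero.
Definition extF (F : Oct -> Oct -> R) (z : Oct * Oct) : R :=
  F (Oscale (/ Onorm (fst z)) (fst z)) (projT (fst z) (snd z)).

(* F p v = F(v) for v in T_p S^7; only values on TS^7 are relevant.
   Smoothness of F on TS^7 \ 0 is expressed as smoothness of F composed with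
   the smooth retraction above (equivalent to smoothness on the submanifold). *)
Definition FinslerS7 (F : Oct -> Oct -> R) : Prop :=
  (forall p v, TS7 p v -> forall eps, 0 < eps -> exists del, 0 < del /\
     forall q w, TS7 q w -> dist16 (p, v) (q, w) < del ->
       Rabs (F q w - F p v) < eps) /\
  (forall p v, TS7 p v -> 0 <= F p v) /\
  Smooth Uoff (extF F) /\
  (forall p v, TS7 p v -> v <> Ozero -> 0 < F p v) /\
  (forall p v l, TS7 p v -> 0 < l -> F p (Oscale l v) = l * F p v) /\
  (* fiberwise Hessian of F^2/2 positive definite at every v <> 0 *)
  (forall p v w, TS7 p v -> v <> Ozero -> Oinner p w = 0 -> w <> Ozero ->
     exists (phi' : R -> R) (del h : R), 0 < del /\
       (forall t, Rabs t < del ->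
          derivable_pt_lim (fun s => (F p (Oadd v (Oscale s w))) ^ 2 / 2) t (phi' t)) /\
       derivable_pt_lim phi' 0 h /\ 0 < h).

(* Spin(7)-invariance for the action (A,B,B).x = B(x) (differential: v |-> B v) *)
Definition Spin7_invariant (F : Oct -> Oct -> R) : Prop :=
  forall g, Spin7 g -> forall p v, TS7 p v ->
    F (mapp (tB g) p) (mapp (tB g) v) = F p v.

Definition constant_length (F : Oct -> Oct -> R) (X : Tri) : Prop :=
  exists c, forall p, onS7 p -> F p (fundField X p) = c.

(* Main.v *)
Require Import Defs.
From Stdlib Require Import Reals Lra Lia.
Open Scope R_scope.


Ltac dO x := let a := fresh "h" in let b := fresh "h" in destruct x as [a b]; destruct a, b.

Ltac os := cbv beta iota zeta delta [Omul Oadd Oscale Osub Oof Oone Ozero ORe Oinner Oconj Hmul Hsub Hadd Hopp Hconj Ocoord fst snd Defs.q0 Defs.q1 Defs.q2 Defs.q3 Nat.eqb sum_f_R0 mapp idM].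

Definition ebasis (j : nat) : Oct := Oof (fun i => if Nat.eqb i j then 1 else 0).
Definition matof (f : Oct -> Oct) : Mat := fun i j => Ocoord (f (ebasis j)) i.
Definition lin (f : Oct -> Oct) : Prop := forall x, f x = mapp (matof f) x.
Definition pres (f : Oct -> Oct) : Prop := forall x y, Oinner (f x) (f y) = Oinner x y.

Lemma Oof_coord (x : Oct) : Oof (Ocoord x) = x.
Proof. dO x; reflexivity. Qed.

Lemma Oeq (x y : Oct) :
  Ocoord x 0 = Ocoord y 0 -> Ocoord x 1 = Ocoord y 1 -> Ocoord x 2 = Ocoord y 2 ->
  Ocoord x 3 = Ocoord y 3 -> Ocoord x 4 = Ocoord y 4 -> Ocoord x 5 = Ocoord y 5 ->
  Ocoord x 6 = Ocoord y 6 -> Ocoord x 7 = Ocoord y 7 -> x = y.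
Proof. dO x; dO y; simpl; intros; subst; reflexivity. Qed.

Lemma Oinner_sum (x y : Oct) :
  Oinner x y = sum_f_R0 (fun k => Ocoord x k * Ocoord y k) 7.
Proof. dO x; dO y. os; ring. Qed.

Lemma lin_comp f g : lin f -> lin g -> lin (fun x => f (g x)).
Proof.
intros Hf Hg x.
assert (E : forall j, f (g (ebasis j)) = mapp (matof f) (g (ebasis j))) by (intro; apply Hf).
assert (E2 : f (g x) = mapp (matof f) (mapp (matof g) x)) by (rewrite <- Hg; apply Hf).
rewrite E2.
apply Oeq; unfold mapp at 1 3, matof at 3; cbv beta; simpl; rewrite ?E; unfold mapp, matof; simpl; ring.
Qed.

Lemma linL a : lin (Omul a).
Proof. intro x. dO a; dO x. apply Oeq; unfold matof, ebasis; os; ring. Qed.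
Lemma linR a : lin (fun x => Omul x a).
Proof. intro x. dO a; dO x. apply Oeq; unfold matof, ebasis; os; ring. Qed.

Lemma inner_mulL (a x y : Oct) : Oinner (Omul a x) (Omul a y) = Oinner a a * Oinner x y.
Proof. rewrite !Oinner_sum. dO a; dO x; dO y. os; ring. Qed.
Lemma inner_mulR (a x y : Oct) : Oinner (Omul x a) (Omul y a) = Oinner a a * Oinner x y.
Proof. rewrite !Oinner_sum. dO a; dO x; dO y. os; ring. Qed.

Lemma presL a : Oinner a a = 1 -> pres (Omul a).
Proof. intros H x y. rewrite inner_mulL, H; ring. Qed.
Lemma presR a : Oinner a a = 1 -> pres (fun x => Omul x a).
Proof. intros H x y. rewrite inner_mulR, H; ring. Qed.
Lemma pres_comp f g : pres f -> pres g -> pres (fun x => f (g x)).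
Proof. intros Hf Hg x y. rewrite Hf; apply Hg. Qed.

Lemma inner_basis i j : (i < 8)%nat -> (j < 8)%nat -> Oinner (ebasis i) (ebasis j) = idM i j.
Proof.
intros Hi Hj. rewrite Oinner_sum.
do 8 (destruct i as [|i]; [ do 8 (destruct j as [|j]; [unfold ebasis, idM; simpl; ring|]); lia |]). lia.
Qed.

Lemma orth_pres f : pres f -> orthM (matof f).
Proof. intros Hf i j Hi Hj. unfold matof.
rewrite <- inner_basis by assumption. rewrite <- (Hf (ebasis i) (ebasis j)).
rewrite Oinner_sum. reflexivity. Qed.


Definition Mmul (M N : Mat) : Mat := fun i j => sum_f_R0 (fun k => M i k * N k j) 7.
Definition Mtr (M : Mat) : Mat := fun i j => M j i.

Module DetBr.
From mathcomp Require Import all_boot all_algebra.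
From mathcomp Require Import Rstruct.
Import GRing.Theory.

Definition mx (n : nat) (M : Mat) : 'M[R]_n := \matrix_(i < n, j < n) M i j.

Lemma sumf_big (f : nat -> R) (n : nat) :
  sum_f_R0 f n = (\sum_(k < n.+1) f k)%R.
Proof.
elim: n => [|n IH] /=; first by rewrite big_ord_recr big_ord0 /= GRing.add0r.
by rewrite IH [in RHS]big_ord_recr.
Qed.

Lemma pow_exp (x : R) n : x ^ n = (x ^+ n)%R.
Proof. by elim: n => //= n ->; rewrite GRing.exprS. Qed.

Lemma lebE (m n : nat) : Nat.leb m n = (m <= n)%N.
Proof. by elim: m n => [|m IH] [|n] //=; rewrite IH. Qed.
Lemma ltbE (m n : nat) : Nat.ltb m n = (m < n)%N.
Proof. by rewrite /Nat.ltb lebE. Qed.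
Lemma eqbE (m n : nat) : Nat.eqb m n = (m == n)%N.
Proof. by elim: m n => [|m IH] [|n] //=; rewrite IH. Qed.

Lemma detn_det n (M : Mat) : detn n M = (\det (mx n M))%R.
Proof.
elim: n M => [|n IH] M.
  by rewrite /= det_mx00.
rewrite /= sumf_big (expand_det_row _ ord0).
apply: eq_bigr => j _.
rewrite IH /cofactor mxE /= pow_exp.
rewrite add0n GRing.mulrA [(M _ _ * _)%R]GRing.mulrC.
congr (_ * _)%R.
congr (\det _)%R. apply/matrixP => r k. rewrite !mxE /= /minor /bump /=.
congr (M _ _). rewrite ltbE. by case: (ltnP k j).
Qed.

Lemma det_ext8 (M N : Mat) :
  (forall i j, (i < 8)%coq_nat -> (j < 8)%coq_nat -> M i j = N i j) -> detn 8 M = detn 8 N.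
Proof.
move=> H; rewrite !detn_det; congr (\det _)%R; apply/matrixP => i j; rewrite !mxE.
by apply: H; apply/ltP.
Qed.

Lemma det_mul8 (M N : Mat) : detn 8 (Mmul M N) = detn 8 M * detn 8 N.
Proof.
rewrite !detn_det RmultE -det_mulmx; congr (\det _)%R; apply/matrixP => i j.
rewrite !mxE /Mmul sumf_big; apply: eq_bigr => k _; by rewrite !mxE.
Qed.

Lemma det_tr8 (M : Mat) : detn 8 (Mtr M) = detn 8 M.
Proof.
rewrite !detn_det -det_tr; congr (\det _)%R; apply/matrixP => i j.
by rewrite !mxE.
Qed.

Lemma det_scal8 (c : R) (M : Mat) : detn 8 (fun i j => c * M i j) = c ^ 8 * detn 8 M.
Proof.
rewrite !detn_det pow_exp RmultE -detZ; congr (\det _)%R; apply/matrixP => i j.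
by rewrite !mxE.
Qed.

Lemma det_id8 : detn 8 idM = 1.
Proof.
rewrite detn_det; transitivity (\det (1%:M : 'M[R]_8))%R; last by rewrite det1.
congr (\det _)%R; apply/matrixP => i j.
rewrite !mxE /idM eqbE.
have -> : (nat_of_ord i == nat_of_ord j) = (i == j) by [].
by case: (i == j); rewrite ?mulr1n ?mulr0n.
Qed.
End DetBr.


Lemma coord_Oof (f : nat -> R) i : (i < 8)%nat -> Ocoord (Oof f) i = f i.
Proof. intro H. do 8 (destruct i as [|i]; [reflexivity|]). lia. Qed.

Lemma matof_comp f g i j : lin f -> (i < 8)%nat ->
  matof (fun x => f (g x)) i j = Mmul (matof f) (matof g) i j.
Proof. intros Hf Hi. unfold matof at 1. rewrite Hf. unfold mapp. rewrite coord_Oof by exact Hi.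
reflexivity. Qed.

Lemma det_comp f g : lin f ->
  detn 8 (matof (fun x => f (g x))) = detn 8 (matof f) * detn 8 (matof g).
Proof. intro Hf. rewrite <- DetBr.det_mul8. apply DetBr.det_ext8. intros i j Hi Hj.
apply matof_comp; assumption. Qed.

Lemma det_sq_orth M : orthM M -> detn 8 M * detn 8 M = 1.
Proof. intro H. rewrite <- DetBr.det_tr8 at 1. rewrite <- DetBr.det_mul8.
rewrite <- DetBr.det_id8. apply DetBr.det_ext8. intros i j Hi Hj. apply H; assumption. Qed.

Lemma coord_scale (k : R) (y : Oct) i : (i < 8)%nat -> Ocoord (Oscale k y) i = k * Ocoord y i.
Proof. intro Hi. unfold Oscale. apply coord_Oof; exact Hi. Qed.

Lemma det_one_crit f h k : lin f -> pres f -> lin h -> k <> 0 ->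
  (forall x, h (h x) = Oscale k (f x)) -> detn 8 (matof f) = 1.
Proof.
intros Hf Hp Hh Hk Hhh.
assert (E : detn 8 (matof h) * detn 8 (matof h) = k ^ 8 * detn 8 (matof f)).
{ rewrite <- det_comp by exact Hh. rewrite <- DetBr.det_scal8. apply DetBr.det_ext8.
  intros i j Hi Hj. unfold matof. rewrite Hhh. apply coord_scale; exact Hi. }
assert (S := det_sq_orth _ (orth_pres f Hp)).
assert (P : 0 < k ^ 8).
{ assert (k ^ 4 <> 0) by (apply pow_nonzero; exact Hk).
  replace (k^8) with ((k^4)*(k^4)) by ring. apply Rsqr_pos_lt; assumption. }
assert (N : 0 <= detn 8 (matof f)).
{ apply Rmult_le_reg_l with (k ^ 8); [exact P|]. rewrite <- E. rewrite Rmult_0_r. apply Rle_0_sqr. }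
nra.
Qed.


Definition Bop (u v : Oct) (x : Oct) : Oct := Omul u (Omul v x).
Definition Aop (u v : Oct) (x : Oct) : Oct := Omul u (Omul (Omul v (Omul x v)) u).
Definition imunit (u : Oct) : Prop := ORe u = 0 /\ Oinner u u = 1.

Definition tsh (t : R) (a : Oct) : Oct := Oadd (Oscale t Oone) a.

Lemma sqL (t : R) (a x : Oct) : Omul (tsh t a) (Omul (tsh t a) x) =
  Oadd (Oscale (t*t - Oinner a a) x) (Oscale (2*t + 2*ORe a) (Omul a x)).
Proof. rewrite Oinner_sum. dO a; dO x. apply Oeq; unfold tsh; os; ring. Qed.

Lemma sqR (t : R) (a x : Oct) : Omul (Omul x (tsh t a)) (tsh t a) =
  Oadd (Oscale (t*t - Oinner a a) x) (Oscale (2*t + 2*ORe a) (Omul x a)).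
Proof. rewrite Oinner_sum. dO a; dO x. apply Oeq; unfold tsh; os; ring. Qed.

Lemma scale_clean (k : R) (x y : Oct) : Oadd (Oscale 0 x) (Oscale k y) = Oscale k y.
Proof. dO x; dO y. apply Oeq; os; ring. Qed.

Lemma pick_t (a0 : R) : exists t, t * t = 1 /\ 2 * t + 2 * a0 <> 0.
Proof. destruct (Req_dec a0 (-1)) as [E|E].
- exists (-1). split; [ring|]. rewrite E. lra.
- exists 1. split; [ring|]. intro H. apply E. lra.
Qed.

Lemma detL (a : Oct) : Oinner a a = 1 -> detn 8 (matof (Omul a)) = 1.
Proof. intro Ha. destruct (pick_t (ORe a)) as [t [Ht Hk]].
apply (det_one_crit (Omul a) (Omul (tsh t a)) (2 * t + 2 * ORe a)).
apply linL. apply presL; exact Ha. apply linL. exact Hk.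
intro x. rewrite sqL, Ht, Ha. replace (1 - 1) with 0 by ring. apply scale_clean.
Qed.

Lemma detR (a : Oct) : Oinner a a = 1 -> detn 8 (matof (fun x => Omul x a)) = 1.
Proof. intro Ha. destruct (pick_t (ORe a)) as [t [Ht Hk]].
apply (det_one_crit (fun x => Omul x a) (fun x => Omul x (tsh t a)) (2 * t + 2 * ORe a)).
apply linR. apply presR; exact Ha. apply linR. exact Hk.
intro x. rewrite sqR, Ht, Ha. replace (1 - 1) with 0 by ring. apply scale_clean.
Qed.

Lemma lin_B u v : lin (Bop u v).
Proof. exact (lin_comp _ _ (linL u) (linL v)). Qed.
Lemma lin_A u v : lin (Aop u v).
Proof. exact (lin_comp _ _ (linL u) (lin_comp _ _ (linR u) (lin_comp _ _ (linL v) (linR v)))). Qed.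
Lemma pres_B u v : imunit u -> imunit v -> pres (Bop u v).
Proof. intros [_ Hu] [_ Hv]. exact (pres_comp _ _ (presL u Hu) (presL v Hv)). Qed.
Lemma pres_A u v : imunit u -> imunit v -> pres (Aop u v).
Proof. intros [_ Hu] [_ Hv].
exact (pres_comp _ _ (presL u Hu) (pres_comp _ _ (presR u Hu) (pres_comp _ _ (presL v Hv) (presR v Hv)))). Qed.
Lemma det_B u v : imunit u -> imunit v -> detn 8 (matof (Bop u v)) = 1.
Proof. intros [_ Hu] [_ Hv]. unfold Bop. rewrite (det_comp (Omul u) (Omul v) (linL u)).
rewrite detL, detL by assumption. ring. Qed.
Lemma det_A u v : imunit u -> imunit v -> detn 8 (matof (Aop u v)) = 1.
Proof. intros [_ Hu] [_ Hv]. unfold Aop.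
rewrite (det_comp (Omul u) (fun x => Omul (Omul v (Omul x v)) u) (linL u)).
rewrite (det_comp (fun x => Omul x u) (fun x => Omul v (Omul x v)) (linR u)).
rewrite (det_comp (Omul v) (fun x => Omul x v) (linL v)).
rewrite detL, detR, detL, detR by assumption. ring. Qed.


Lemma moufang_im (a z w : Oct) : ORe a = 0 ->
  Omul (Omul a (Omul z a)) (Omul a w) = Oscale (- Oinner a a) (Omul a (Omul z w)).
Proof. intro H. rewrite Oinner_sum. dO a; dO z; dO w. cbv [ORe fst Defs.q0] in H. subst.
apply Oeq; os; ring. Qed.

Lemma mul_scale_r (c : R) (a y : Oct) : Omul a (Oscale c y) = Oscale c (Omul a y).
Proof. dO a; dO y. apply Oeq; os; ring. Qed.
Lemma scale_scale (c d : R) (y : Oct) : Oscale c (Oscale d y) = Oscale (c * d) y.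
Proof. dO y. apply Oeq; os; ring. Qed.
Lemma scale_one (y : Oct) : Oscale 1 y = y.
Proof. dO y. apply Oeq; os; ring. Qed.

Lemma triality u v x y : imunit u -> imunit v ->
  Omul (Aop u v x) (Bop u v y) = Bop u v (Omul x y).
Proof. intros [Hu0 Hu] [Hv0 Hv]. unfold Aop, Bop.
rewrite (moufang_im u (Omul v (Omul x v)) (Omul v y) Hu0).
rewrite (moufang_im v x y Hv0). rewrite mul_scale_r, scale_scale, Hu, Hv.
replace (- (1) * - (1)) with 1 by ring. apply scale_one. Qed.

Definition gel u v := mkTri (matof (Aop u v)) (matof (Bop u v)) (matof (Bop u v)).

Lemma gel_spin7 u v : imunit u -> imunit v -> Spin7 (gel u v).
Proof. intros Hu Hv. split; [|intro; reflexivity].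
split; [|split; [|split]].
- split; [apply orth_pres, pres_A; assumption | apply det_A; assumption].
- split; [apply orth_pres, pres_B; assumption | apply det_B; assumption].
- split; [apply orth_pres, pres_B; assumption | apply det_B; assumption].
- intros x y. cbv [gel tA tB tC].
  rewrite <- (lin_A u v x), <- (lin_B u v y), <- (lin_B u v (Omul x y)).
  apply triality; assumption.
Qed.

Lemma inv_step F u v p x : Spin7_invariant F -> imunit u -> imunit v -> TS7 p x ->
  F (Bop u v p) (Bop u v x) = F p x.
Proof. intros HF Hu Hv HT. rewrite (lin_B u v p), (lin_B u v x).
exact (HF (gel u v) (gel_spin7 u v Hu Hv) p x HT). Qed.

Lemma TS7_step u v p x : imunit u -> imunit v -> TS7 p x -> TS7 (Bop u v p) (Bop u v x).
Proof. intros Hu Hv [H1 H2]. unfold TS7, onS7. rewrite !(pres_B u v Hu Hv). split; assumption. Qed.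

Lemma unit_step u v x : imunit u -> imunit v -> Oinner x x = 1 -> Oinner (Bop u v x) (Bop u v x) = 1.
Proof. intros Hu Hv H. rewrite (pres_B u v Hu Hv). exact H. Qed.


Lemma rot_ex_m (X Y : R) : exists C S, C*C+S*S = 1 /\ (C*C-S*S)*Y - 2*C*S*X = 0 /\
  0 <= (C*C-S*S)*X + 2*C*S*Y.
Proof.
set (r := sqrt (X*X+Y*Y)).
assert (Hr0 : 0 <= r) by apply sqrt_pos.
assert (Hrr : r * r = X*X+Y*Y) by (apply sqrt_sqrt; nra).
assert (HrX : 0 <= r + X) by nra.
destruct (Req_dec (r + X) 0) as [E|E]; [destruct (Req_dec Y 0) as [EY|EY]|].
- exists 0, 1. subst. nra.
- set (rho := sqrt ((r+X)*(r+X)+Y*Y)).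
  assert (Hp : 0 < (r+X)*(r+X)+Y*Y) by nra.
  assert (Hrho : rho * rho = (r+X)*(r+X)+Y*Y) by (apply sqrt_sqrt; nra).
  assert (Hrho0 : rho <> 0) by (intro Z; rewrite Z in Hrho; nra).
  exists ((r+X)/rho), (Y/rho). repeat split.
  + replace (((r + X) / rho) * ((r + X) / rho) + (Y / rho) * (Y / rho)) with (((r+X)*(r+X)+Y*Y)/(rho*rho)) by (field; exact Hrho0).
    rewrite <- Hrho. field. exact Hrho0.
  + replace ((((r + X) / rho) * ((r + X) / rho) - (Y / rho) * (Y / rho)) * Y - 2 * ((r + X) / rho) * (Y / rho) * X)
      with (Y * (r*r - X*X - Y*Y) / (rho * rho)) by (field; exact Hrho0).
    rewrite Hrr. replace (X*X+Y*Y-X*X-Y*Y) with 0 by ring. unfold Rdiv. ring.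
  + replace ((((r + X) / rho) * ((r + X) / rho) - (Y / rho) * (Y / rho)) * X + 2 * ((r + X) / rho) * (Y / rho) * Y)
      with (((r+X)*(r+X)*X + Y*Y*(r + X + r)) / (rho * rho)) by (field; exact Hrho0).
    rewrite Hrho. unfold Rdiv; apply Rmult_le_pos; [|left; apply Rinv_0_lt_compat; exact Hp].
    replace (Y*Y) with (r*r - X*X) by lra. nra.
- set (rho := sqrt ((r+X)*(r+X)+Y*Y)).
  assert (Hp : 0 < (r+X)*(r+X)+Y*Y) by nra.
  assert (Hrho : rho * rho = (r+X)*(r+X)+Y*Y) by (apply sqrt_sqrt; nra).
  assert (Hrho0 : rho <> 0) by (intro Z; rewrite Z in Hrho; nra).
  exists ((r+X)/rho), (Y/rho). repeat split.
  + replace (((r + X) / rho) * ((r + X) / rho) + (Y / rho) * (Y / rho)) with (((r+X)*(r+X)+Y*Y)/(rho*rho)) by (field; exact Hrho0).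
    rewrite <- Hrho. field. exact Hrho0.
  + replace ((((r + X) / rho) * ((r + X) / rho) - (Y / rho) * (Y / rho)) * Y - 2 * ((r + X) / rho) * (Y / rho) * X)
      with (Y * (r*r - X*X - Y*Y) / (rho * rho)) by (field; exact Hrho0).
    rewrite Hrr. replace (X*X+Y*Y-X*X-Y*Y) with 0 by ring. unfold Rdiv. ring.
  + replace ((((r + X) / rho) * ((r + X) / rho) - (Y / rho) * (Y / rho)) * X + 2 * ((r + X) / rho) * (Y / rho) * Y)
      with (((r+X)*(r+X)*X + Y*Y*(r + X + r)) / (rho * rho)) by (field; exact Hrho0).
    rewrite Hrho. unfold Rdiv; apply Rmult_le_pos; [|left; apply Rinv_0_lt_compat; exact Hp].
    replace (Y*Y) with (r*r - X*X) by lra. nra.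
Qed.

Lemma rot_ex_p (X Y : R) : exists C S, C*C+S*S = 1 /\ (C*C-S*S)*Y + 2*C*S*X = 0 /\
  0 <= (C*C-S*S)*X - 2*C*S*Y.
Proof. destruct (rot_ex_m X Y) as (C & S & H1 & H2 & H3). exists C, (-S).
repeat split.
- rewrite <- H1; ring.
- replace ((C * C - - S * - S) * Y + 2 * C * - S * X) with ((C*C-S*S)*Y - 2*C*S*X) by ring. exact H2.
- 
replace ((C * C - - S * - S) * X - 2 * C * - S * Y) with ((C*C-S*S)*X + 2*C*S*Y) by ring. exact H3. Qed.


Definition mk8 (a0 a1 a2 a3 a4 a5 a6 a7 : R) : Oct := (mkH a0 a1 a2 a3, mkH a4 a5 a6 a7).
Definition vvec (a b : nat) (c s : R) : Oct := Oadd (Oscale c (ebasis a)) (Oscale s (ebasis b)).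

Ltac imu_solve C S H := split; [unfold vvec, ebasis; os; ring |
  rewrite Oinner_sum; unfold vvec, ebasis; os; transitivity (C*C+S*S); [ring | exact H]].

Lemma imu_e a : (1 <= a <= 7)%nat -> imunit (ebasis a).
Proof. intro H.
do 8 (destruct a as [|a]; [first [lia | split; [unfold ebasis; os; ring | rewrite Oinner_sum; unfold ebasis; os; ring]] |]).
lia. Qed.

Lemma zero_by (a b : R) : a = b -> b = 0 -> a = 0.
Proof. intros; subst; reflexivity. Qed.
Lemma one_by (a b : R) : a = b -> b = 1 -> a = 1.
Proof. intros; subst; reflexivity. Qed.
Lemma le_by (a b : R) : a = b -> 0 <= b -> 0 <= a.
Proof. intros; subst; assumption. Qed.

Lemma move2 F (HF : Spin7_invariant F) u1 v1 u2 v2 P X :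
  imunit u1 -> imunit v1 -> imunit u2 -> imunit v2 -> TS7 P X -> Oinner X X = 1 ->
  F P X = F (Bop u2 v2 (Bop u1 v1 P)) (Bop u2 v2 (Bop u1 v1 X)) /\
  TS7 (Bop u2 v2 (Bop u1 v1 P)) (Bop u2 v2 (Bop u1 v1 X)) /\
  Oinner (Bop u2 v2 (Bop u1 v1 X)) (Bop u2 v2 (Bop u1 v1 X)) = 1.
Proof. intros H1 H2 H3 H4 HT HU. split; [|split].
- rewrite (inv_step F u2 v2), (inv_step F u1 v1); try assumption; [reflexivity|].
  apply TS7_step; assumption.
- apply TS7_step; try assumption. apply TS7_step; assumption.
- apply unit_step; try assumption. apply unit_step; assumption.
Qed.

Lemma mid (p0 p1 p2 p3 p4 p5 p6 p7 x0 x1 x2 x3 x4 x5 x6 x7 : R) :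
  TS7 (mk8 p0 p1 p2 p3 p4 p5 p6 p7) (mk8 x0 x1 x2 x3 x4 x5 x6 x7) ->
  p1 = 0 -> p2 = 0 -> p3 = 0 -> p4 = 0 -> p5 = 0 -> p6 = 0 -> p7 = 0 -> 0 <= p0 ->
  p0 = 1 /\ x0 = 0.
Proof. intros [Hs Ho] H1 H2 H3 H4 H5 H6 H7 H0. unfold onS7 in Hs.
rewrite Oinner_sum in Hs, Ho. unfold mk8 in Hs, Ho. os. cbv beta iota zeta delta [sum_f_R0 Ocoord fst snd Defs.q0 Defs.q1 Defs.q2 Defs.q3] in Hs, Ho.
subst. assert (E : p0 = 1) by nra. subst. split; [reflexivity | nra]. Qed.

Lemma fin (p0 p1 p2 p3 p4 p5 p6 p7 x0 x1 x2 x3 x4 x5 x6 x7 : R) :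
  TS7 (mk8 p0 p1 p2 p3 p4 p5 p6 p7) (mk8 x0 x1 x2 x3 x4 x5 x6 x7) ->
  Oinner (mk8 x0 x1 x2 x3 x4 x5 x6 x7) (mk8 x0 x1 x2 x3 x4 x5 x6 x7) = 1 ->
  p1 = 0 -> p2 = 0 -> p3 = 0 -> p4 = 0 -> p5 = 0 -> p6 = 0 -> p7 = 0 -> p0 = 1 ->
  x0 = 0 -> x2 = 0 -> x3 = 0 -> x4 = 0 -> x5 = 0 -> x6 = 0 -> x7 = 0 -> 0 <= x1 -> x1 = 1.
Proof. intros _ HU H1 H2 H3 H4 H5 H6 H7 H0 K0 K2 K3 K4 K5 K6 K7 K1.
rewrite Oinner_sum in HU. unfold mk8 in HU.
cbv beta iota zeta delta [sum_f_R0 Ocoord fst snd Defs.q0 Defs.q1 Defs.q2 Defs.q3] in HU.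
subst. nra. Qed.
Lemma bop_1_2 (c s a0 a1 a2 a3 a4 a5 a6 a7 : R) : Bop (ebasis 1) (vvec 1 2 c s) (mk8 a0 a1 a2 a3 a4 a5 a6 a7) = mk8 (- c * a0 + (-1) * s * a3) (- c * a1 + (-1) * s * a2) (- c * a2 + (1) * s * a1) (- c * a3 + (1) * s * a0) (- c * a4 + (1) * s * a7) (- c * a5 + (-1) * s * a6) (- c * a6 + (1) * s * a5) (- c * a7 + (-1) * s * a4).
Proof. apply Oeq; unfold Bop, vvec, ebasis, mk8; os; ring. Qed.

Lemma bop_1_3 (c s a0 a1 a2 a3 a4 a5 a6 a7 : R) : Bop (ebasis 1) (vvec 1 3 c s) (mk8 a0 a1 a2 a3 a4 a5 a6 a7) = mk8 (- c * a0 + (1) * s * a2) (- c * a1 + (-1) * s * a3) (- c * a2 + (-1) * s * a0) (- c * a3 + (1) * s * a1) (- c * a4 + (-1) * s * a6) (- c * a5 + (-1) * s * a7) (- c * a6 + (1) * s * a4) (- c * a7 + (1) * s * a5).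
Proof. apply Oeq; unfold Bop, vvec, ebasis, mk8; os; ring. Qed.

Lemma bop_1_5 (c s a0 a1 a2 a3 a4 a5 a6 a7 : R) : Bop (ebasis 1) (vvec 1 5 c s) (mk8 a0 a1 a2 a3 a4 a5 a6 a7) = mk8 (- c * a0 + (1) * s * a4) (- c * a1 + (-1) * s * a5) (- c * a2 + (1) * s * a6) (- c * a3 + (1) * s * a7) (- c * a4 + (-1) * s * a0) (- c * a5 + (1) * s * a1) (- c * a6 + (-1) * s * a2) (- c * a7 + (-1) * s * a3).
Proof. apply Oeq; unfold Bop, vvec, ebasis, mk8; os; ring. Qed.

Lemma bop_1_6 (c s a0 a1 a2 a3 a4 a5 a6 a7 : R) : Bop (ebasis 1) (vvec 1 6 c s) (mk8 a0 a1 a2 a3 a4 a5 a6 a7) = mk8 (- c * a0 + (1) * s * a7) (- c * a1 + (-1) * s * a6) (- c * a2 + (-1) * s * a5) (- c * a3 + (-1) * s * a4) (- c * a4 + (1) * s * a3) (- c * a5 + (1) * s * a2) (- c * a6 + (1) * s * a1) (- c * a7 + (-1) * s * a0).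
Proof. apply Oeq; unfold Bop, vvec, ebasis, mk8; os; ring. Qed.

Lemma bop_1_7 (c s a0 a1 a2 a3 a4 a5 a6 a7 : R) : Bop (ebasis 1) (vvec 1 7 c s) (mk8 a0 a1 a2 a3 a4 a5 a6 a7) = mk8 (- c * a0 + (-1) * s * a6) (- c * a1 + (-1) * s * a7) (- c * a2 + (1) * s * a4) (- c * a3 + (-1) * s * a5) (- c * a4 + (-1) * s * a2) (- c * a5 + (1) * s * a3) (- c * a6 + (1) * s * a0) (- c * a7 + (1) * s * a1).
Proof. apply Oeq; unfold Bop, vvec, ebasis, mk8; os; ring. Qed.

Lemma bop_2_3 (c s a0 a1 a2 a3 a4 a5 a6 a7 : R) : Bop (ebasis 2) (vvec 2 3 c s) (mk8 a0 a1 a2 a3 a4 a5 a6 a7) = mk8 (- c * a0 + (-1) * s * a1) (- c * a1 + (1) * s * a0) (- c * a2 + (-1) * s * a3) (- c * a3 + (1) * s * a2) (- c * a4 + (1) * s * a5) (- c * a5 + (-1) * s * a4) (- c * a6 + (-1) * s * a7) (- c * a7 + (1) * s * a6).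
Proof. apply Oeq; unfold Bop, vvec, ebasis, mk8; os; ring. Qed.

Lemma bop_2_4 (c s a0 a1 a2 a3 a4 a5 a6 a7 : R) : Bop (ebasis 2) (vvec 2 4 c s) (mk8 a0 a1 a2 a3 a4 a5 a6 a7) = mk8 (- c * a0 + (-1) * s * a6) (- c * a1 + (1) * s * a7) (- c * a2 + (-1) * s * a4) (- c * a3 + (-1) * s * a5) (- c * a4 + (1) * s * a2) (- c * a5 + (1) * s * a3) (- c * a6 + (1) * s * a0) (- c * a7 + (-1) * s * a1).
Proof. apply Oeq; unfold Bop, vvec, ebasis, mk8; os; ring. Qed.

Lemma bop_2_5 (c s a0 a1 a2 a3 a4 a5 a6 a7 : R) : Bop (ebasis 2) (vvec 2 5 c s) (mk8 a0 a1 a2 a3 a4 a5 a6 a7) = mk8 (- c * a0 + (-1) * s * a7) (- c * a1 + (-1) * s * a6) (- c * a2 + (-1) * s * a5) (- c * a3 + (1) * s * a4) (- c * a4 + (-1) * s * a3) (- c * a5 + (1) * s * a2) (- c * a6 + (1) * s * a1) (- c * a7 + (1) * s * a0).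
Proof. apply Oeq; unfold Bop, vvec, ebasis, mk8; os; ring. Qed.

Lemma bop_2_6 (c s a0 a1 a2 a3 a4 a5 a6 a7 : R) : Bop (ebasis 2) (vvec 2 6 c s) (mk8 a0 a1 a2 a3 a4 a5 a6 a7) = mk8 (- c * a0 + (1) * s * a4) (- c * a1 + (1) * s * a5) (- c * a2 + (-1) * s * a6) (- c * a3 + (1) * s * a7) (- c * a4 + (-1) * s * a0) (- c * a5 + (-1) * s * a1) (- c * a6 + (1) * s * a2) (- c * a7 + (-1) * s * a3).
Proof. apply Oeq; unfold Bop, vvec, ebasis, mk8; os; ring. Qed.

Lemma bop_2_7 (c s a0 a1 a2 a3 a4 a5 a6 a7 : R) : Bop (ebasis 2) (vvec 2 7 c s) (mk8 a0 a1 a2 a3 a4 a5 a6 a7) = mk8 (- c * a0 + (1) * s * a5) (- c * a1 + (-1) * s * a4) (- c * a2 + (-1) * s * a7) (- c * a3 + (-1) * s * a6) (- c * a4 + (1) * s * a1) (- c * a5 + (-1) * s * a0) (- c * a6 + (1) * s * a3) (- c * a7 + (1) * s * a2).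
Proof. apply Oeq; unfold Bop, vvec, ebasis, mk8; os; ring. Qed.

Lemma bop_3_5 (c s a0 a1 a2 a3 a4 a5 a6 a7 : R) : Bop (ebasis 3) (vvec 3 5 c s) (mk8 a0 a1 a2 a3 a4 a5 a6 a7) = mk8 (- c * a0 + (1) * s * a6) (- c * a1 + (-1) * s * a7) (- c * a2 + (-1) * s * a4) (- c * a3 + (-1) * s * a5) (- c * a4 + (1) * s * a2) (- c * a5 + (1) * s * a3) (- c * a6 + (-1) * s * a0) (- c * a7 + (1) * s * a1).
Proof. apply Oeq; unfold Bop, vvec, ebasis, mk8; os; ring. Qed.

Lemma bop_3_6 (c s a0 a1 a2 a3 a4 a5 a6 a7 : R) : Bop (ebasis 3) (vvec 3 6 c s) (mk8 a0 a1 a2 a3 a4 a5 a6 a7) = mk8 (- c * a0 + (-1) * s * a5) (- c * a1 + (1) * s * a4) (- c * a2 + (-1) * s * a7) (- c * a3 + (-1) * s * a6) (- c * a4 + (-1) * s * a1) (- c * a5 + (1) * s * a0) (- c * a6 + (1) * s * a3) (- c * a7 + (1) * s * a2).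
Proof. apply Oeq; unfold Bop, vvec, ebasis, mk8; os; ring. Qed.

Lemma bop_4_3 (c s a0 a1 a2 a3 a4 a5 a6 a7 : R) : Bop (ebasis 4) (vvec 4 3 c s) (mk8 a0 a1 a2 a3 a4 a5 a6 a7) = mk8 (- c * a0 + (1) * s * a7) (- c * a1 + (1) * s * a6) (- c * a2 + (-1) * s * a5) (- c * a3 + (1) * s * a4) (- c * a4 + (-1) * s * a3) (- c * a5 + (1) * s * a2) (- c * a6 + (-1) * s * a1) (- c * a7 + (-1) * s * a0).
Proof. apply Oeq; unfold Bop, vvec, ebasis, mk8; os; ring. Qed.

Lemma bop_4_5 (c s a0 a1 a2 a3 a4 a5 a6 a7 : R) : Bop (ebasis 4) (vvec 4 5 c s) (mk8 a0 a1 a2 a3 a4 a5 a6 a7) = mk8 (- c * a0 + (-1) * s * a1) (- c * a1 + (1) * s * a0) (- c * a2 + (1) * s * a3) (- c * a3 + (-1) * s * a2) (- c * a4 + (-1) * s * a5) (- c * a5 + (1) * s * a4) (- c * a6 + (-1) * s * a7) (- c * a7 + (1) * s * a6).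
Proof. apply Oeq; unfold Bop, vvec, ebasis, mk8; os; ring. Qed.

Lemma bop_4_7 (c s a0 a1 a2 a3 a4 a5 a6 a7 : R) : Bop (ebasis 4) (vvec 4 7 c s) (mk8 a0 a1 a2 a3 a4 a5 a6 a7) = mk8 (- c * a0 + (-1) * s * a3) (- c * a1 + (1) * s * a2) (- c * a2 + (-1) * s * a1) (- c * a3 + (1) * s * a0) (- c * a4 + (-1) * s * a7) (- c * a5 + (-1) * s * a6) (- c * a6 + (1) * s * a5) (- c * a7 + (1) * s * a4).
Proof. apply Oeq; unfold Bop, vvec, ebasis, mk8; os; ring. Qed.

Lemma bop_5_6 (c s a0 a1 a2 a3 a4 a5 a6 a7 : R) : Bop (ebasis 5) (vvec 5 6 c s) (mk8 a0 a1 a2 a3 a4 a5 a6 a7) = mk8 (- c * a0 + (1) * s * a3) (- c * a1 + (-1) * s * a2) (- c * a2 + (1) * s * a1) (- c * a3 + (-1) * s * a0) (- c * a4 + (-1) * s * a7) (- c * a5 + (-1) * s * a6) (- c * a6 + (1) * s * a5) (- c * a7 + (1) * s * a4).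
Proof. apply Oeq; unfold Bop, vvec, ebasis, mk8; os; ring. Qed.

Lemma bop_5_7 (c s a0 a1 a2 a3 a4 a5 a6 a7 : R) : Bop (ebasis 5) (vvec 5 7 c s) (mk8 a0 a1 a2 a3 a4 a5 a6 a7) = mk8 (- c * a0 + (-1) * s * a2) (- c * a1 + (-1) * s * a3) (- c * a2 + (1) * s * a0) (- c * a3 + (1) * s * a1) (- c * a4 + (1) * s * a6) (- c * a5 + (-1) * s * a7) (- c * a6 + (-1) * s * a4) (- c * a7 + (1) * s * a5).
Proof. apply Oeq; unfold Bop, vvec, ebasis, mk8; os; ring. Qed.

Lemma bop_6_4 (c s a0 a1 a2 a3 a4 a5 a6 a7 : R) : Bop (ebasis 6) (vvec 6 4 c s) (mk8 a0 a1 a2 a3 a4 a5 a6 a7) = mk8 (- c * a0 + (1) * s * a2) (- c * a1 + (1) * s * a3) (- c * a2 + (-1) * s * a0) (- c * a3 + (-1) * s * a1) (- c * a4 + (1) * s * a6) (- c * a5 + (-1) * s * a7) (- c * a6 + (-1) * s * a4) (- c * a7 + (1) * s * a5).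
Proof. apply Oeq; unfold Bop, vvec, ebasis, mk8; os; ring. Qed.

Lemma bop_6_7 (c s a0 a1 a2 a3 a4 a5 a6 a7 : R) : Bop (ebasis 6) (vvec 6 7 c s) (mk8 a0 a1 a2 a3 a4 a5 a6 a7) = mk8 (- c * a0 + (1) * s * a1) (- c * a1 + (-1) * s * a0) (- c * a2 + (-1) * s * a3) (- c * a3 + (1) * s * a2) (- c * a4 + (-1) * s * a5) (- c * a5 + (1) * s * a4) (- c * a6 + (-1) * s * a7) (- c * a7 + (1) * s * a6).
Proof. apply Oeq; unfold Bop, vvec, ebasis, mk8; os; ring. Qed.

Lemma cmp0 (C S a0 a1 a2 a3 a4 a5 a6 a7 : R) :
  Bop (ebasis 6) (vvec 6 7 (-C) (-S)) (Bop (ebasis 4) (vvec 4 5 (-C) S) (mk8 a0 a1 a2 a3 a4 a5 a6 a7)) =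
  mk8 ((C*C + (-1)*S*S)*a0 + ((-2)*C*S)*a1) (((2)*C*S)*a0 + (C*C + (-1)*S*S)*a1) ((C*C + (-1)*S*S)*a2 + ((2)*C*S)*a3) (((-2)*C*S)*a2 + (C*C + (-1)*S*S)*a3) ((C*C + (1)*S*S)*a4) ((C*C + (1)*S*S)*a5) ((C*C + (1)*S*S)*a6) ((C*C + (1)*S*S)*a7).
Proof. rewrite bop_4_5, bop_6_7. f_equal; ring. Qed.

Lemma stp0 F (HF : Spin7_invariant F) (p0 p1 p2 p3 p4 p5 p6 p7 x0 x1 x2 x3 x4 x5 x6 x7 : R) :
  TS7 (mk8 p0 p1 p2 p3 p4 p5 p6 p7) (mk8 x0 x1 x2 x3 x4 x5 x6 x7) -> Oinner (mk8 x0 x1 x2 x3 x4 x5 x6 x7) (mk8 x0 x1 x2 x3 x4 x5 x6 x7) = 1 ->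
  exists q0 q1 q2 q3 q4 q5 q6 q7 y0 y1 y2 y3 y4 y5 y6 y7, TS7 (mk8 q0 q1 q2 q3 q4 q5 q6 q7) (mk8 y0 y1 y2 y3 y4 y5 y6 y7) /\ Oinner (mk8 y0 y1 y2 y3 y4 y5 y6 y7) (mk8 y0 y1 y2 y3 y4 y5 y6 y7) = 1 /\
  F (mk8 p0 p1 p2 p3 p4 p5 p6 p7) (mk8 x0 x1 x2 x3 x4 x5 x6 x7) = F (mk8 q0 q1 q2 q3 q4 q5 q6 q7) (mk8 y0 y1 y2 y3 y4 y5 y6 y7) /\ q1 = 0.
Proof.
intros HT HU .
destruct (rot_ex_p p0 p1) as (C & S & HCS & H0 & H1).
assert (Hv1 : imunit (vvec 4 5 (-C) S)) by (imu_solve C S HCS).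
assert (Hv2 : imunit (vvec 6 7 (-C) (-S))) by (imu_solve C S HCS).
destruct (move2 F HF (ebasis 4) (vvec 4 5 (-C) S) (ebasis 6) (vvec 6 7 (-C) (-S)) _ _ (imu_e 4 ltac:(lia)) Hv1 (imu_e 6 ltac:(lia)) Hv2 HT HU) as (E & HT' & HU').
rewrite (cmp0 C S p0 p1 p2 p3 p4 p5 p6 p7), (cmp0 C S x0 x1 x2 x3 x4 x5 x6 x7) in E. rewrite (cmp0 C S p0 p1 p2 p3 p4 p5 p6 p7), (cmp0 C S x0 x1 x2 x3 x4 x5 x6 x7) in HT'. rewrite (cmp0 C S x0 x1 x2 x3 x4 x5 x6 x7) in HU'.
exists ((C*C + (-1)*S*S)*p0 + ((-2)*C*S)*p1), (((2)*C*S)*p0 + (C*C + (-1)*S*S)*p1), ((C*C + (-1)*S*S)*p2 + ((2)*C*S)*p3), (((-2)*C*S)*p2 + (C*C + (-1)*S*S)*p3), ((C*C + (1)*S*S)*p4), ((C*C + (1)*S*S)*p5), ((C*C + (1)*S*S)*p6), ((C*C + (1)*S*S)*p7), ((C*C + (-1)*S*S)*x0 + ((-2)*C*S)*x1), (((2)*C*S)*x0 + (C*C + (-1)*S*S)*x1), ((C*C + (-1)*S*S)*x2 + ((2)*C*S)*x3), (((-2)*C*S)*x2 + (C*C + (-1)*S*S)*x3), ((C*C + (1)*S*S)*x4), ((C*C + (1)*S*S)*x5), ((C*C + (1)*S*S)*x6), ((C*C + (1)*S*S)*x7).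
refine (conj HT' (conj HU' (conj E _))).
subst.
eapply zero_by; [idtac | exact H0]; ring.
Qed.

Lemma cmp1 (C S a0 a1 a2 a3 a4 a5 a6 a7 : R) :
  Bop (ebasis 5) (vvec 5 7 (-C) (-S)) (Bop (ebasis 1) (vvec 1 3 (-C) S) (mk8 a0 a1 a2 a3 a4 a5 a6 a7)) =
  mk8 ((C*C + (-1)*S*S)*a0 + ((2)*C*S)*a2) ((C*C + (1)*S*S)*a1) (((-2)*C*S)*a0 + (C*C + (-1)*S*S)*a2) ((C*C + (1)*S*S)*a3) ((C*C + (-1)*S*S)*a4 + ((-2)*C*S)*a6) ((C*C + (1)*S*S)*a5) (((2)*C*S)*a4 + (C*C + (-1)*S*S)*a6) ((C*C + (1)*S*S)*a7).
Proof. rewrite bop_1_3, bop_5_7. f_equal; ring. Qed.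

Lemma stp1 F (HF : Spin7_invariant F) (p0 p1 p2 p3 p4 p5 p6 p7 x0 x1 x2 x3 x4 x5 x6 x7 : R) :
  TS7 (mk8 p0 p1 p2 p3 p4 p5 p6 p7) (mk8 x0 x1 x2 x3 x4 x5 x6 x7) -> Oinner (mk8 x0 x1 x2 x3 x4 x5 x6 x7) (mk8 x0 x1 x2 x3 x4 x5 x6 x7) = 1 -> p1 = 0 ->
  exists q0 q1 q2 q3 q4 q5 q6 q7 y0 y1 y2 y3 y4 y5 y6 y7, TS7 (mk8 q0 q1 q2 q3 q4 q5 q6 q7) (mk8 y0 y1 y2 y3 y4 y5 y6 y7) /\ Oinner (mk8 y0 y1 y2 y3 y4 y5 y6 y7) (mk8 y0 y1 y2 y3 y4 y5 y6 y7) = 1 /\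
  F (mk8 p0 p1 p2 p3 p4 p5 p6 p7) (mk8 x0 x1 x2 x3 x4 x5 x6 x7) = F (mk8 q0 q1 q2 q3 q4 q5 q6 q7) (mk8 y0 y1 y2 y3 y4 y5 y6 y7) /\ q1 = 0 /\ q2 = 0.
Proof.
intros HT HU Hf0.
destruct (rot_ex_m p0 p2) as (C & S & HCS & H0 & H1).
assert (Hv1 : imunit (vvec 1 3 (-C) S)) by (imu_solve C S HCS).
assert (Hv2 : imunit (vvec 5 7 (-C) (-S))) by (imu_solve C S HCS).
destruct (move2 F HF (ebasis 1) (vvec 1 3 (-C) S) (ebasis 5) (vvec 5 7 (-C) (-S)) _ _ (imu_e 1 ltac:(lia)) Hv1 (imu_e 5 ltac:(lia)) Hv2 HT HU) as (E & HT' & HU').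
rewrite (cmp1 C S p0 p1 p2 p3 p4 p5 p6 p7), (cmp1 C S x0 x1 x2 x3 x4 x5 x6 x7) in E. rewrite (cmp1 C S p0 p1 p2 p3 p4 p5 p6 p7), (cmp1 C S x0 x1 x2 x3 x4 x5 x6 x7) in HT'. rewrite (cmp1 C S x0 x1 x2 x3 x4 x5 x6 x7) in HU'.
exists ((C*C + (-1)*S*S)*p0 + ((2)*C*S)*p2), ((C*C + (1)*S*S)*p1), (((-2)*C*S)*p0 + (C*C + (-1)*S*S)*p2), ((C*C + (1)*S*S)*p3), ((C*C + (-1)*S*S)*p4 + ((-2)*C*S)*p6), ((C*C + (1)*S*S)*p5), (((2)*C*S)*p4 + (C*C + (-1)*S*S)*p6), ((C*C + (1)*S*S)*p7), ((C*C + (-1)*S*S)*x0 + ((2)*C*S)*x2), ((C*C + (1)*S*S)*x1), (((-2)*C*S)*x0 + (C*C + (-1)*S*S)*x2), ((C*C + (1)*S*S)*x3), ((C*C + (-1)*S*S)*x4 + ((-2)*C*S)*x6), ((C*C + (1)*S*S)*x5), (((2)*C*S)*x4 + (C*C + (-1)*S*S)*x6), ((C*C + (1)*S*S)*x7).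
refine (conj HT' (conj HU' (conj E _))).
subst.
split; [ring |].
eapply zero_by; [idtac | exact H0]; ring.
Qed.

Lemma cmp2 (C S a0 a1 a2 a3 a4 a5 a6 a7 : R) :
  Bop (ebasis 5) (vvec 5 6 (-C) (-S)) (Bop (ebasis 4) (vvec 4 7 (-C) S) (mk8 a0 a1 a2 a3 a4 a5 a6 a7)) =
  mk8 ((C*C + (-1)*S*S)*a0 + ((-2)*C*S)*a3) ((C*C + (-1)*S*S)*a1 + ((2)*C*S)*a2) (((-2)*C*S)*a1 + (C*C + (-1)*S*S)*a2) (((2)*C*S)*a0 + (C*C + (-1)*S*S)*a3) ((C*C + (1)*S*S)*a4) ((C*C + (1)*S*S)*a5) ((C*C + (1)*S*S)*a6) ((C*C + (1)*S*S)*a7).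
Proof. rewrite bop_4_7, bop_5_6. f_equal; ring. Qed.

Lemma stp2 F (HF : Spin7_invariant F) (p0 p1 p2 p3 p4 p5 p6 p7 x0 x1 x2 x3 x4 x5 x6 x7 : R) :
  TS7 (mk8 p0 p1 p2 p3 p4 p5 p6 p7) (mk8 x0 x1 x2 x3 x4 x5 x6 x7) -> Oinner (mk8 x0 x1 x2 x3 x4 x5 x6 x7) (mk8 x0 x1 x2 x3 x4 x5 x6 x7) = 1 -> p1 = 0 -> p2 = 0 ->
  exists q0 q1 q2 q3 q4 q5 q6 q7 y0 y1 y2 y3 y4 y5 y6 y7, TS7 (mk8 q0 q1 q2 q3 q4 q5 q6 q7) (mk8 y0 y1 y2 y3 y4 y5 y6 y7) /\ Oinner (mk8 y0 y1 y2 y3 y4 y5 y6 y7) (mk8 y0 y1 y2 y3 y4 y5 y6 y7) = 1 /\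
  F (mk8 p0 p1 p2 p3 p4 p5 p6 p7) (mk8 x0 x1 x2 x3 x4 x5 x6 x7) = F (mk8 q0 q1 q2 q3 q4 q5 q6 q7) (mk8 y0 y1 y2 y3 y4 y5 y6 y7) /\ q1 = 0 /\ q2 = 0 /\ q3 = 0.
Proof.
intros HT HU Hf0 Hf1.
destruct (rot_ex_p p0 p3) as (C & S & HCS & H0 & H1).
assert (Hv1 : imunit (vvec 4 7 (-C) S)) by (imu_solve C S HCS).
assert (Hv2 : imunit (vvec 5 6 (-C) (-S))) by (imu_solve C S HCS).
destruct (move2 F HF (ebasis 4) (vvec 4 7 (-C) S) (ebasis 5) (vvec 5 6 (-C) (-S)) _ _ (imu_e 4 ltac:(lia)) Hv1 (imu_e 5 ltac:(lia)) Hv2 HT HU) as (E & HT' & HU').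
rewrite (cmp2 C S p0 p1 p2 p3 p4 p5 p6 p7), (cmp2 C S x0 x1 x2 x3 x4 x5 x6 x7) in E. rewrite (cmp2 C S p0 p1 p2 p3 p4 p5 p6 p7), (cmp2 C S x0 x1 x2 x3 x4 x5 x6 x7) in HT'. rewrite (cmp2 C S x0 x1 x2 x3 x4 x5 x6 x7) in HU'.
exists ((C*C + (-1)*S*S)*p0 + ((-2)*C*S)*p3), ((C*C + (-1)*S*S)*p1 + ((2)*C*S)*p2), (((-2)*C*S)*p1 + (C*C + (-1)*S*S)*p2), (((2)*C*S)*p0 + (C*C + (-1)*S*S)*p3), ((C*C + (1)*S*S)*p4), ((C*C + (1)*S*S)*p5), ((C*C + (1)*S*S)*p6), ((C*C + (1)*S*S)*p7), ((C*C + (-1)*S*S)*x0 + ((-2)*C*S)*x3), ((C*C + (-1)*S*S)*x1 + ((2)*C*S)*x2), (((-2)*C*S)*x1 + (C*C + (-1)*S*S)*x2), (((2)*C*S)*x0 + (C*C + (-1)*S*S)*x3), ((C*C + (1)*S*S)*x4), ((C*C + (1)*S*S)*x5), ((C*C + (1)*S*S)*x6), ((C*C + (1)*S*S)*x7).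
refine (conj HT' (conj HU' (conj E _))).
subst.
split; [ring |].
split; [ring |].
eapply zero_by; [idtac | exact H0]; ring.
Qed.

Lemma cmp3 (C S a0 a1 a2 a3 a4 a5 a6 a7 : R) :
  Bop (ebasis 4) (vvec 4 7 (-C) (-S)) (Bop (ebasis 1) (vvec 1 2 (-C) S) (mk8 a0 a1 a2 a3 a4 a5 a6 a7)) =
  mk8 ((C*C + (1)*S*S)*a0) ((C*C + (-1)*S*S)*a1 + ((-2)*C*S)*a2) (((2)*C*S)*a1 + (C*C + (-1)*S*S)*a2) ((C*C + (1)*S*S)*a3) ((C*C + (-1)*S*S)*a4 + ((2)*C*S)*a7) ((C*C + (1)*S*S)*a5) ((C*C + (1)*S*S)*a6) (((-2)*C*S)*a4 + (C*C + (-1)*S*S)*a7).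
Proof. rewrite bop_1_2, bop_4_7. f_equal; ring. Qed.

Lemma stp3 F (HF : Spin7_invariant F) (p0 p1 p2 p3 p4 p5 p6 p7 x0 x1 x2 x3 x4 x5 x6 x7 : R) :
  TS7 (mk8 p0 p1 p2 p3 p4 p5 p6 p7) (mk8 x0 x1 x2 x3 x4 x5 x6 x7) -> Oinner (mk8 x0 x1 x2 x3 x4 x5 x6 x7) (mk8 x0 x1 x2 x3 x4 x5 x6 x7) = 1 -> p1 = 0 -> p2 = 0 -> p3 = 0 ->
  exists q0 q1 q2 q3 q4 q5 q6 q7 y0 y1 y2 y3 y4 y5 y6 y7, TS7 (mk8 q0 q1 q2 q3 q4 q5 q6 q7) (mk8 y0 y1 y2 y3 y4 y5 y6 y7) /\ Oinner (mk8 y0 y1 y2 y3 y4 y5 y6 y7) (mk8 y0 y1 y2 y3 y4 y5 y6 y7) = 1 /\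
  F (mk8 p0 p1 p2 p3 p4 p5 p6 p7) (mk8 x0 x1 x2 x3 x4 x5 x6 x7) = F (mk8 q0 q1 q2 q3 q4 q5 q6 q7) (mk8 y0 y1 y2 y3 y4 y5 y6 y7) /\ q1 = 0 /\ q2 = 0 /\ q3 = 0 /\ q4 = 0.
Proof.
intros HT HU Hf0 Hf1 Hf2.
destruct (rot_ex_p p7 p4) as (C & S & HCS & H0 & H1).
assert (Hv1 : imunit (vvec 1 2 (-C) S)) by (imu_solve C S HCS).
assert (Hv2 : imunit (vvec 4 7 (-C) (-S))) by (imu_solve C S HCS).
destruct (move2 F HF (ebasis 1) (vvec 1 2 (-C) S) (ebasis 4) (vvec 4 7 (-C) (-S)) _ _ (imu_e 1 ltac:(lia)) Hv1 (imu_e 4 ltac:(lia)) Hv2 HT HU) as (E & HT' & HU').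
rewrite (cmp3 C S p0 p1 p2 p3 p4 p5 p6 p7), (cmp3 C S x0 x1 x2 x3 x4 x5 x6 x7) in E. rewrite (cmp3 C S p0 p1 p2 p3 p4 p5 p6 p7), (cmp3 C S x0 x1 x2 x3 x4 x5 x6 x7) in HT'. rewrite (cmp3 C S x0 x1 x2 x3 x4 x5 x6 x7) in HU'.
exists ((C*C + (1)*S*S)*p0), ((C*C + (-1)*S*S)*p1 + ((-2)*C*S)*p2), (((2)*C*S)*p1 + (C*C + (-1)*S*S)*p2), ((C*C + (1)*S*S)*p3), ((C*C + (-1)*S*S)*p4 + ((2)*C*S)*p7), ((C*C + (1)*S*S)*p5), ((C*C + (1)*S*S)*p6), (((-2)*C*S)*p4 + (C*C + (-1)*S*S)*p7), ((C*C + (1)*S*S)*x0), ((C*C + (-1)*S*S)*x1 + ((-2)*C*S)*x2), (((2)*C*S)*x1 + (C*C + (-1)*S*S)*x2), ((C*C + (1)*S*S)*x3), ((C*C + (-1)*S*S)*x4 + ((2)*C*S)*x7), ((C*C + (1)*S*S)*x5), ((C*C + (1)*S*S)*x6), (((-2)*C*S)*x4 + (C*C + (-1)*S*S)*x7).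
refine (conj HT' (conj HU' (conj E _))).
subst.
split; [ring |].
split; [ring |].
split; [ring |].
eapply zero_by; [idtac | exact H0]; ring.
Qed.

Lemma cmp4 (C S a0 a1 a2 a3 a4 a5 a6 a7 : R) :
  Bop (ebasis 3) (vvec 3 6 (-C) (-S)) (Bop (ebasis 2) (vvec 2 7 (-C) S) (mk8 a0 a1 a2 a3 a4 a5 a6 a7)) =
  mk8 ((C*C + (-1)*S*S)*a0 + ((2)*C*S)*a5) ((C*C + (-1)*S*S)*a1 + ((-2)*C*S)*a4) ((C*C + (1)*S*S)*a2) ((C*C + (1)*S*S)*a3) (((2)*C*S)*a1 + (C*C + (-1)*S*S)*a4) (((-2)*C*S)*a0 + (C*C + (-1)*S*S)*a5) ((C*C + (1)*S*S)*a6) ((C*C + (1)*S*S)*a7).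
Proof. rewrite bop_2_7, bop_3_6. f_equal; ring. Qed.

Lemma stp4 F (HF : Spin7_invariant F) (p0 p1 p2 p3 p4 p5 p6 p7 x0 x1 x2 x3 x4 x5 x6 x7 : R) :
  TS7 (mk8 p0 p1 p2 p3 p4 p5 p6 p7) (mk8 x0 x1 x2 x3 x4 x5 x6 x7) -> Oinner (mk8 x0 x1 x2 x3 x4 x5 x6 x7) (mk8 x0 x1 x2 x3 x4 x5 x6 x7) = 1 -> p1 = 0 -> p2 = 0 -> p3 = 0 -> p4 = 0 ->
  exists q0 q1 q2 q3 q4 q5 q6 q7 y0 y1 y2 y3 y4 y5 y6 y7, TS7 (mk8 q0 q1 q2 q3 q4 q5 q6 q7) (mk8 y0 y1 y2 y3 y4 y5 y6 y7) /\ Oinner (mk8 y0 y1 y2 y3 y4 y5 y6 y7) (mk8 y0 y1 y2 y3 y4 y5 y6 y7) = 1 /\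
  F (mk8 p0 p1 p2 p3 p4 p5 p6 p7) (mk8 x0 x1 x2 x3 x4 x5 x6 x7) = F (mk8 q0 q1 q2 q3 q4 q5 q6 q7) (mk8 y0 y1 y2 y3 y4 y5 y6 y7) /\ q1 = 0 /\ q2 = 0 /\ q3 = 0 /\ q4 = 0 /\ q5 = 0.
Proof.
intros HT HU Hf0 Hf1 Hf2 Hf3.
destruct (rot_ex_m p0 p5) as (C & S & HCS & H0 & H1).
assert (Hv1 : imunit (vvec 2 7 (-C) S)) by (imu_solve C S HCS).
assert (Hv2 : imunit (vvec 3 6 (-C) (-S))) by (imu_solve C S HCS).
destruct (move2 F HF (ebasis 2) (vvec 2 7 (-C) S) (ebasis 3) (vvec 3 6 (-C) (-S)) _ _ (imu_e 2 ltac:(lia)) Hv1 (imu_e 3 ltac:(lia)) Hv2 HT HU) as (E & HT' & HU').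
rewrite (cmp4 C S p0 p1 p2 p3 p4 p5 p6 p7), (cmp4 C S x0 x1 x2 x3 x4 x5 x6 x7) in E. rewrite (cmp4 C S p0 p1 p2 p3 p4 p5 p6 p7), (cmp4 C S x0 x1 x2 x3 x4 x5 x6 x7) in HT'. rewrite (cmp4 C S x0 x1 x2 x3 x4 x5 x6 x7) in HU'.
exists ((C*C + (-1)*S*S)*p0 + ((2)*C*S)*p5), ((C*C + (-1)*S*S)*p1 + ((-2)*C*S)*p4), ((C*C + (1)*S*S)*p2), ((C*C + (1)*S*S)*p3), (((2)*C*S)*p1 + (C*C + (-1)*S*S)*p4), (((-2)*C*S)*p0 + (C*C + (-1)*S*S)*p5), ((C*C + (1)*S*S)*p6), ((C*C + (1)*S*S)*p7), ((C*C + (-1)*S*S)*x0 + ((2)*C*S)*x5), ((C*C + (-1)*S*S)*x1 + ((-2)*C*S)*x4), ((C*C + (1)*S*S)*x2), ((C*C + (1)*S*S)*x3), (((2)*C*S)*x1 + (C*C + (-1)*S*S)*x4), (((-2)*C*S)*x0 + (C*C + (-1)*S*S)*x5), ((C*C + (1)*S*S)*x6), ((C*C + (1)*S*S)*x7).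
refine (conj HT' (conj HU' (conj E _))).
subst.
split; [ring |].
split; [ring |].
split; [ring |].
split; [ring |].
eapply zero_by; [idtac | exact H0]; ring.
Qed.

Lemma cmp5 (C S a0 a1 a2 a3 a4 a5 a6 a7 : R) :
  Bop (ebasis 3) (vvec 3 5 (-C) (-S)) (Bop (ebasis 1) (vvec 1 7 (-C) S) (mk8 a0 a1 a2 a3 a4 a5 a6 a7)) =
  mk8 ((C*C + (-1)*S*S)*a0 + ((-2)*C*S)*a6) ((C*C + (1)*S*S)*a1) ((C*C + (-1)*S*S)*a2 + ((2)*C*S)*a4) ((C*C + (1)*S*S)*a3) (((-2)*C*S)*a2 + (C*C + (-1)*S*S)*a4) ((C*C + (1)*S*S)*a5) (((2)*C*S)*a0 + (C*C + (-1)*S*S)*a6) ((C*C + (1)*S*S)*a7).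
Proof. rewrite bop_1_7, bop_3_5. f_equal; ring. Qed.

Lemma stp5 F (HF : Spin7_invariant F) (p0 p1 p2 p3 p4 p5 p6 p7 x0 x1 x2 x3 x4 x5 x6 x7 : R) :
  TS7 (mk8 p0 p1 p2 p3 p4 p5 p6 p7) (mk8 x0 x1 x2 x3 x4 x5 x6 x7) -> Oinner (mk8 x0 x1 x2 x3 x4 x5 x6 x7) (mk8 x0 x1 x2 x3 x4 x5 x6 x7) = 1 -> p1 = 0 -> p2 = 0 -> p3 = 0 -> p4 = 0 -> p5 = 0 ->
  exists q0 q1 q2 q3 q4 q5 q6 q7 y0 y1 y2 y3 y4 y5 y6 y7, TS7 (mk8 q0 q1 q2 q3 q4 q5 q6 q7) (mk8 y0 y1 y2 y3 y4 y5 y6 y7) /\ Oinner (mk8 y0 y1 y2 y3 y4 y5 y6 y7) (mk8 y0 y1 y2 y3 y4 y5 y6 y7) = 1 /\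
  F (mk8 p0 p1 p2 p3 p4 p5 p6 p7) (mk8 x0 x1 x2 x3 x4 x5 x6 x7) = F (mk8 q0 q1 q2 q3 q4 q5 q6 q7) (mk8 y0 y1 y2 y3 y4 y5 y6 y7) /\ q1 = 0 /\ q2 = 0 /\ q3 = 0 /\ q4 = 0 /\ q5 = 0 /\ q6 = 0.
Proof.
intros HT HU Hf0 Hf1 Hf2 Hf3 Hf4.
destruct (rot_ex_p p0 p6) as (C & S & HCS & H0 & H1).
assert (Hv1 : imunit (vvec 1 7 (-C) S)) by (imu_solve C S HCS).
assert (Hv2 : imunit (vvec 3 5 (-C) (-S))) by (imu_solve C S HCS).
destruct (move2 F HF (ebasis 1) (vvec 1 7 (-C) S) (ebasis 3) (vvec 3 5 (-C) (-S)) _ _ (imu_e 1 ltac:(lia)) Hv1 (imu_e 3 ltac:(lia)) Hv2 HT HU) as (E & HT' & HU').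
rewrite (cmp5 C S p0 p1 p2 p3 p4 p5 p6 p7), (cmp5 C S x0 x1 x2 x3 x4 x5 x6 x7) in E. rewrite (cmp5 C S p0 p1 p2 p3 p4 p5 p6 p7), (cmp5 C S x0 x1 x2 x3 x4 x5 x6 x7) in HT'. rewrite (cmp5 C S x0 x1 x2 x3 x4 x5 x6 x7) in HU'.
exists ((C*C + (-1)*S*S)*p0 + ((-2)*C*S)*p6), ((C*C + (1)*S*S)*p1), ((C*C + (-1)*S*S)*p2 + ((2)*C*S)*p4), ((C*C + (1)*S*S)*p3), (((-2)*C*S)*p2 + (C*C + (-1)*S*S)*p4), ((C*C + (1)*S*S)*p5), (((2)*C*S)*p0 + (C*C + (-1)*S*S)*p6), ((C*C + (1)*S*S)*p7), ((C*C + (-1)*S*S)*x0 + ((-2)*C*S)*x6), ((C*C + (1)*S*S)*x1), ((C*C + (-1)*S*S)*x2 + ((2)*C*S)*x4), ((C*C + (1)*S*S)*x3), (((-2)*C*S)*x2 + (C*C + (-1)*S*S)*x4), ((C*C + (1)*S*S)*x5), (((2)*C*S)*x0 + (C*C + (-1)*S*S)*x6), ((C*C + (1)*S*S)*x7).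
refine (conj HT' (conj HU' (conj E _))).
subst.
split; [ring |].
split; [ring |].
split; [ring |].
split; [ring |].
split; [ring |].
eapply zero_by; [idtac | exact H0]; ring.
Qed.

Lemma cmp6 (C S a0 a1 a2 a3 a4 a5 a6 a7 : R) :
  Bop (ebasis 4) (vvec 4 3 (-C) (-S)) (Bop (ebasis 2) (vvec 2 5 (-C) S) (mk8 a0 a1 a2 a3 a4 a5 a6 a7)) =
  mk8 ((C*C + (-1)*S*S)*a0 + ((-2)*C*S)*a7) ((C*C + (-1)*S*S)*a1 + ((-2)*C*S)*a6) ((C*C + (1)*S*S)*a2) ((C*C + (1)*S*S)*a3) ((C*C + (1)*S*S)*a4) ((C*C + (1)*S*S)*a5) (((2)*C*S)*a1 + (C*C + (-1)*S*S)*a6) (((2)*C*S)*a0 + (C*C + (-1)*S*S)*a7).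
Proof. rewrite bop_2_5, bop_4_3. f_equal; ring. Qed.

Lemma stp6 F (HF : Spin7_invariant F) (p0 p1 p2 p3 p4 p5 p6 p7 x0 x1 x2 x3 x4 x5 x6 x7 : R) :
  TS7 (mk8 p0 p1 p2 p3 p4 p5 p6 p7) (mk8 x0 x1 x2 x3 x4 x5 x6 x7) -> Oinner (mk8 x0 x1 x2 x3 x4 x5 x6 x7) (mk8 x0 x1 x2 x3 x4 x5 x6 x7) = 1 -> p1 = 0 -> p2 = 0 -> p3 = 0 -> p4 = 0 -> p5 = 0 -> p6 = 0 ->
  exists q0 q1 q2 q3 q4 q5 q6 q7 y0 y1 y2 y3 y4 y5 y6 y7, TS7 (mk8 q0 q1 q2 q3 q4 q5 q6 q7) (mk8 y0 y1 y2 y3 y4 y5 y6 y7) /\ Oinner (mk8 y0 y1 y2 y3 y4 y5 y6 y7) (mk8 y0 y1 y2 y3 y4 y5 y6 y7) = 1 /\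
  F (mk8 p0 p1 p2 p3 p4 p5 p6 p7) (mk8 x0 x1 x2 x3 x4 x5 x6 x7) = F (mk8 q0 q1 q2 q3 q4 q5 q6 q7) (mk8 y0 y1 y2 y3 y4 y5 y6 y7) /\ q1 = 0 /\ q2 = 0 /\ q3 = 0 /\ q4 = 0 /\ q5 = 0 /\ q6 = 0 /\ q7 = 0 /\ 0 <= q0.
Proof.
intros HT HU Hf0 Hf1 Hf2 Hf3 Hf4 Hf5.
destruct (rot_ex_p p0 p7) as (C & S & HCS & H0 & H1).
assert (Hv1 : imunit (vvec 2 5 (-C) S)) by (imu_solve C S HCS).
assert (Hv2 : imunit (vvec 4 3 (-C) (-S))) by (imu_solve C S HCS).
destruct (move2 F HF (ebasis 2) (vvec 2 5 (-C) S) (ebasis 4) (vvec 4 3 (-C) (-S)) _ _ (imu_e 2 ltac:(lia)) Hv1 (imu_e 4 ltac:(lia)) Hv2 HT HU) as (E & HT' & HU').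
rewrite (cmp6 C S p0 p1 p2 p3 p4 p5 p6 p7), (cmp6 C S x0 x1 x2 x3 x4 x5 x6 x7) in E. rewrite (cmp6 C S p0 p1 p2 p3 p4 p5 p6 p7), (cmp6 C S x0 x1 x2 x3 x4 x5 x6 x7) in HT'. rewrite (cmp6 C S x0 x1 x2 x3 x4 x5 x6 x7) in HU'.
exists ((C*C + (-1)*S*S)*p0 + ((-2)*C*S)*p7), ((C*C + (-1)*S*S)*p1 + ((-2)*C*S)*p6), ((C*C + (1)*S*S)*p2), ((C*C + (1)*S*S)*p3), ((C*C + (1)*S*S)*p4), ((C*C + (1)*S*S)*p5), (((2)*C*S)*p1 + (C*C + (-1)*S*S)*p6), (((2)*C*S)*p0 + (C*C + (-1)*S*S)*p7), ((C*C + (-1)*S*S)*x0 + ((-2)*C*S)*x7), ((C*C + (-1)*S*S)*x1 + ((-2)*C*S)*x6), ((C*C + (1)*S*S)*x2), ((C*C + (1)*S*S)*x3), ((C*C + (1)*S*S)*x4), ((C*C + (1)*S*S)*x5), (((2)*C*S)*x1 + (C*C + (-1)*S*S)*x6), (((2)*C*S)*x0 + (C*C + (-1)*S*S)*x7).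
refine (conj HT' (conj HU' (conj E _))).
subst.
split; [ring |].
split; [ring |].
split; [ring |].
split; [ring |].
split; [ring |].
split; [ring |].
split; [eapply zero_by; [idtac | exact H0]; ring |].
eapply le_by; [idtac | exact H1]; ring.
Qed.

Lemma cmp7 (C S a0 a1 a2 a3 a4 a5 a6 a7 : R) :
  Bop (ebasis 4) (vvec 4 7 (-C) (-S)) (Bop (ebasis 1) (vvec 1 2 (-C) S) (mk8 a0 a1 a2 a3 a4 a5 a6 a7)) =
  mk8 ((C*C + (1)*S*S)*a0) ((C*C + (-1)*S*S)*a1 + ((-2)*C*S)*a2) (((2)*C*S)*a1 + (C*C + (-1)*S*S)*a2) ((C*C + (1)*S*S)*a3) ((C*C + (-1)*S*S)*a4 + ((2)*C*S)*a7) ((C*C + (1)*S*S)*a5) ((C*C + (1)*S*S)*a6) (((-2)*C*S)*a4 + (C*C + (-1)*S*S)*a7).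
Proof. rewrite bop_1_2, bop_4_7. f_equal; ring. Qed.

Lemma stp7 F (HF : Spin7_invariant F) (p0 p1 p2 p3 p4 p5 p6 p7 x0 x1 x2 x3 x4 x5 x6 x7 : R) :
  TS7 (mk8 p0 p1 p2 p3 p4 p5 p6 p7) (mk8 x0 x1 x2 x3 x4 x5 x6 x7) -> Oinner (mk8 x0 x1 x2 x3 x4 x5 x6 x7) (mk8 x0 x1 x2 x3 x4 x5 x6 x7) = 1 -> p0 = 1 -> p1 = 0 -> p2 = 0 -> p3 = 0 -> p4 = 0 -> p5 = 0 -> p6 = 0 -> p7 = 0 -> x0 = 0 ->
  exists q0 q1 q2 q3 q4 q5 q6 q7 y0 y1 y2 y3 y4 y5 y6 y7, TS7 (mk8 q0 q1 q2 q3 q4 q5 q6 q7) (mk8 y0 y1 y2 y3 y4 y5 y6 y7) /\ Oinner (mk8 y0 y1 y2 y3 y4 y5 y6 y7) (mk8 y0 y1 y2 y3 y4 y5 y6 y7) = 1 /\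
  F (mk8 p0 p1 p2 p3 p4 p5 p6 p7) (mk8 x0 x1 x2 x3 x4 x5 x6 x7) = F (mk8 q0 q1 q2 q3 q4 q5 q6 q7) (mk8 y0 y1 y2 y3 y4 y5 y6 y7) /\ q0 = 1 /\ q1 = 0 /\ q2 = 0 /\ q3 = 0 /\ q4 = 0 /\ q5 = 0 /\ q6 = 0 /\ q7 = 0 /\ y0 = 0 /\ y2 = 0.
Proof.
intros HT HU Hf0 Hf1 Hf2 Hf3 Hf4 Hf5 Hf6 Hf7 Hf8.
destruct (rot_ex_p x1 x2) as (C & S & HCS & H0 & H1).
assert (Hv1 : imunit (vvec 1 2 (-C) S)) by (imu_solve C S HCS).
assert (Hv2 : imunit (vvec 4 7 (-C) (-S))) by (imu_solve C S HCS).
destruct (move2 F HF (ebasis 1) (vvec 1 2 (-C) S) (ebasis 4) (vvec 4 7 (-C) (-S)) _ _ (imu_e 1 ltac:(lia)) Hv1 (imu_e 4 ltac:(lia)) Hv2 HT HU) as (E & HT' & HU').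
rewrite (cmp7 C S p0 p1 p2 p3 p4 p5 p6 p7), (cmp7 C S x0 x1 x2 x3 x4 x5 x6 x7) in E. rewrite (cmp7 C S p0 p1 p2 p3 p4 p5 p6 p7), (cmp7 C S x0 x1 x2 x3 x4 x5 x6 x7) in HT'. rewrite (cmp7 C S x0 x1 x2 x3 x4 x5 x6 x7) in HU'.
exists ((C*C + (1)*S*S)*p0), ((C*C + (-1)*S*S)*p1 + ((-2)*C*S)*p2), (((2)*C*S)*p1 + (C*C + (-1)*S*S)*p2), ((C*C + (1)*S*S)*p3), ((C*C + (-1)*S*S)*p4 + ((2)*C*S)*p7), ((C*C + (1)*S*S)*p5), ((C*C + (1)*S*S)*p6), (((-2)*C*S)*p4 + (C*C + (-1)*S*S)*p7), ((C*C + (1)*S*S)*x0), ((C*C + (-1)*S*S)*x1 + ((-2)*C*S)*x2), (((2)*C*S)*x1 + (C*C + (-1)*S*S)*x2), ((C*C + (1)*S*S)*x3), ((C*C + (-1)*S*S)*x4 + ((2)*C*S)*x7), ((C*C + (1)*S*S)*x5), ((C*C + (1)*S*S)*x6), (((-2)*C*S)*x4 + (C*C + (-1)*S*S)*x7).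
refine (conj HT' (conj HU' (conj E _))).
subst.
split; [eapply one_by; [idtac | exact HCS]; ring |].
split; [ring |].
split; [ring |].
split; [ring |].
split; [ring |].
split; [ring |].
split; [ring |].
split; [ring |].
split; [ring |].
eapply zero_by; [idtac | exact H0]; ring.
Qed.

Lemma cmp8 (C S a0 a1 a2 a3 a4 a5 a6 a7 : R) :
  Bop (ebasis 6) (vvec 6 4 (-C) (-S)) (Bop (ebasis 1) (vvec 1 3 (-C) S) (mk8 a0 a1 a2 a3 a4 a5 a6 a7)) =
  mk8 ((C*C + (1)*S*S)*a0) ((C*C + (-1)*S*S)*a1 + ((-2)*C*S)*a3) ((C*C + (1)*S*S)*a2) (((2)*C*S)*a1 + (C*C + (-1)*S*S)*a3) ((C*C + (-1)*S*S)*a4 + ((-2)*C*S)*a6) ((C*C + (1)*S*S)*a5) (((2)*C*S)*a4 + (C*C + (-1)*S*S)*a6) ((C*C + (1)*S*S)*a7).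
Proof. rewrite bop_1_3, bop_6_4. f_equal; ring. Qed.

Lemma stp8 F (HF : Spin7_invariant F) (p0 p1 p2 p3 p4 p5 p6 p7 x0 x1 x2 x3 x4 x5 x6 x7 : R) :
  TS7 (mk8 p0 p1 p2 p3 p4 p5 p6 p7) (mk8 x0 x1 x2 x3 x4 x5 x6 x7) -> Oinner (mk8 x0 x1 x2 x3 x4 x5 x6 x7) (mk8 x0 x1 x2 x3 x4 x5 x6 x7) = 1 -> p0 = 1 -> p1 = 0 -> p2 = 0 -> p3 = 0 -> p4 = 0 -> p5 = 0 -> p6 = 0 -> p7 = 0 -> x0 = 0 -> x2 = 0 ->
  exists q0 q1 q2 q3 q4 q5 q6 q7 y0 y1 y2 y3 y4 y5 y6 y7, TS7 (mk8 q0 q1 q2 q3 q4 q5 q6 q7) (mk8 y0 y1 y2 y3 y4 y5 y6 y7) /\ Oinner (mk8 y0 y1 y2 y3 y4 y5 y6 y7) (mk8 y0 y1 y2 y3 y4 y5 y6 y7) = 1 /\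
  F (mk8 p0 p1 p2 p3 p4 p5 p6 p7) (mk8 x0 x1 x2 x3 x4 x5 x6 x7) = F (mk8 q0 q1 q2 q3 q4 q5 q6 q7) (mk8 y0 y1 y2 y3 y4 y5 y6 y7) /\ q0 = 1 /\ q1 = 0 /\ q2 = 0 /\ q3 = 0 /\ q4 = 0 /\ q5 = 0 /\ q6 = 0 /\ q7 = 0 /\ y0 = 0 /\ y2 = 0 /\ y3 = 0.
Proof.
intros HT HU Hf0 Hf1 Hf2 Hf3 Hf4 Hf5 Hf6 Hf7 Hf8 Hf9.
destruct (rot_ex_p x1 x3) as (C & S & HCS & H0 & H1).
assert (Hv1 : imunit (vvec 1 3 (-C) S)) by (imu_solve C S HCS).
assert (Hv2 : imunit (vvec 6 4 (-C) (-S))) by (imu_solve C S HCS).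
destruct (move2 F HF (ebasis 1) (vvec 1 3 (-C) S) (ebasis 6) (vvec 6 4 (-C) (-S)) _ _ (imu_e 1 ltac:(lia)) Hv1 (imu_e 6 ltac:(lia)) Hv2 HT HU) as (E & HT' & HU').
rewrite (cmp8 C S p0 p1 p2 p3 p4 p5 p6 p7), (cmp8 C S x0 x1 x2 x3 x4 x5 x6 x7) in E. rewrite (cmp8 C S p0 p1 p2 p3 p4 p5 p6 p7), (cmp8 C S x0 x1 x2 x3 x4 x5 x6 x7) in HT'. rewrite (cmp8 C S x0 x1 x2 x3 x4 x5 x6 x7) in HU'.
exists ((C*C + (1)*S*S)*p0), ((C*C + (-1)*S*S)*p1 + ((-2)*C*S)*p3), ((C*C + (1)*S*S)*p2), (((2)*C*S)*p1 + (C*C + (-1)*S*S)*p3), ((C*C + (-1)*S*S)*p4 + ((-2)*C*S)*p6), ((C*C + (1)*S*S)*p5), (((2)*C*S)*p4 + (C*C + (-1)*S*S)*p6), ((C*C + (1)*S*S)*p7), ((C*C + (1)*S*S)*x0), ((C*C + (-1)*S*S)*x1 + ((-2)*C*S)*x3), ((C*C + (1)*S*S)*x2), (((2)*C*S)*x1 + (C*C + (-1)*S*S)*x3), ((C*C + (-1)*S*S)*x4 + ((-2)*C*S)*x6), ((C*C + (1)*S*S)*x5), (((2)*C*S)*x4 + (C*C + (-1)*S*S)*x6), ((C*C + (1)*S*S)*x7).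
refine (conj HT' (conj HU' (conj E _))).
subst.
split; [eapply one_by; [idtac | exact HCS]; ring |].
split; [ring |].
split; [ring |].
split; [ring |].
split; [ring |].
split; [ring |].
split; [ring |].
split; [ring |].
split; [ring |].
split; [ring |].
eapply zero_by; [idtac | exact H0]; ring.
Qed.

Lemma cmp9 (C S a0 a1 a2 a3 a4 a5 a6 a7 : R) :
  Bop (ebasis 4) (vvec 4 5 (-C) (-S)) (Bop (ebasis 2) (vvec 2 3 (-C) S) (mk8 a0 a1 a2 a3 a4 a5 a6 a7)) =
  mk8 ((C*C + (1)*S*S)*a0) ((C*C + (1)*S*S)*a1) ((C*C + (-1)*S*S)*a2 + ((-2)*C*S)*a3) (((2)*C*S)*a2 + (C*C + (-1)*S*S)*a3) ((C*C + (-1)*S*S)*a4 + ((2)*C*S)*a5) (((-2)*C*S)*a4 + (C*C + (-1)*S*S)*a5) ((C*C + (1)*S*S)*a6) ((C*C + (1)*S*S)*a7).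
Proof. rewrite bop_2_3, bop_4_5. f_equal; ring. Qed.

Lemma stp9 F (HF : Spin7_invariant F) (p0 p1 p2 p3 p4 p5 p6 p7 x0 x1 x2 x3 x4 x5 x6 x7 : R) :
  TS7 (mk8 p0 p1 p2 p3 p4 p5 p6 p7) (mk8 x0 x1 x2 x3 x4 x5 x6 x7) -> Oinner (mk8 x0 x1 x2 x3 x4 x5 x6 x7) (mk8 x0 x1 x2 x3 x4 x5 x6 x7) = 1 -> p0 = 1 -> p1 = 0 -> p2 = 0 -> p3 = 0 -> p4 = 0 -> p5 = 0 -> p6 = 0 -> p7 = 0 -> x0 = 0 -> x2 = 0 -> x3 = 0 ->
  exists q0 q1 q2 q3 q4 q5 q6 q7 y0 y1 y2 y3 y4 y5 y6 y7, TS7 (mk8 q0 q1 q2 q3 q4 q5 q6 q7) (mk8 y0 y1 y2 y3 y4 y5 y6 y7) /\ Oinner (mk8 y0 y1 y2 y3 y4 y5 y6 y7) (mk8 y0 y1 y2 y3 y4 y5 y6 y7) = 1 /\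
  F (mk8 p0 p1 p2 p3 p4 p5 p6 p7) (mk8 x0 x1 x2 x3 x4 x5 x6 x7) = F (mk8 q0 q1 q2 q3 q4 q5 q6 q7) (mk8 y0 y1 y2 y3 y4 y5 y6 y7) /\ q0 = 1 /\ q1 = 0 /\ q2 = 0 /\ q3 = 0 /\ q4 = 0 /\ q5 = 0 /\ q6 = 0 /\ q7 = 0 /\ y0 = 0 /\ y2 = 0 /\ y3 = 0 /\ y4 = 0.
Proof.
intros HT HU Hf0 Hf1 Hf2 Hf3 Hf4 Hf5 Hf6 Hf7 Hf8 Hf9 Hf10.
destruct (rot_ex_p x5 x4) as (C & S & HCS & H0 & H1).
assert (Hv1 : imunit (vvec 2 3 (-C) S)) by (imu_solve C S HCS).
assert (Hv2 : imunit (vvec 4 5 (-C) (-S))) by (imu_solve C S HCS).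
destruct (move2 F HF (ebasis 2) (vvec 2 3 (-C) S) (ebasis 4) (vvec 4 5 (-C) (-S)) _ _ (imu_e 2 ltac:(lia)) Hv1 (imu_e 4 ltac:(lia)) Hv2 HT HU) as (E & HT' & HU').
rewrite (cmp9 C S p0 p1 p2 p3 p4 p5 p6 p7), (cmp9 C S x0 x1 x2 x3 x4 x5 x6 x7) in E. rewrite (cmp9 C S p0 p1 p2 p3 p4 p5 p6 p7), (cmp9 C S x0 x1 x2 x3 x4 x5 x6 x7) in HT'. rewrite (cmp9 C S x0 x1 x2 x3 x4 x5 x6 x7) in HU'.
exists ((C*C + (1)*S*S)*p0), ((C*C + (1)*S*S)*p1), ((C*C + (-1)*S*S)*p2 + ((-2)*C*S)*p3), (((2)*C*S)*p2 + (C*C + (-1)*S*S)*p3), ((C*C + (-1)*S*S)*p4 + ((2)*C*S)*p5), (((-2)*C*S)*p4 + (C*C + (-1)*S*S)*p5), ((C*C + (1)*S*S)*p6), ((C*C + (1)*S*S)*p7), ((C*C + (1)*S*S)*x0), ((C*C + (1)*S*S)*x1), ((C*C + (-1)*S*S)*x2 + ((-2)*C*S)*x3), (((2)*C*S)*x2 + (C*C + (-1)*S*S)*x3), ((C*C + (-1)*S*S)*x4 + ((2)*C*S)*x5), (((-2)*C*S)*x4 + (C*C + (-1)*S*S)*x5), ((C*C + (1)*S*S)*x6), ((C*C + (1)*S*S)*x7).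
refine (conj HT' (conj HU' (conj E _))).
subst.
split; [eapply one_by; [idtac | exact HCS]; ring |].
split; [ring |].
split; [ring |].
split; [ring |].
split; [ring |].
split; [ring |].
split; [ring |].
split; [ring |].
split; [ring |].
split; [ring |].
split; [ring |].
eapply zero_by; [idtac | exact H0]; ring.
Qed.

Lemma cmp10 (C S a0 a1 a2 a3 a4 a5 a6 a7 : R) :
  Bop (ebasis 4) (vvec 4 3 (-C) (-S)) (Bop (ebasis 1) (vvec 1 6 (-C) S) (mk8 a0 a1 a2 a3 a4 a5 a6 a7)) =
  mk8 ((C*C + (1)*S*S)*a0) ((C*C + (-1)*S*S)*a1 + ((-2)*C*S)*a6) ((C*C + (1)*S*S)*a2) ((C*C + (-1)*S*S)*a3 + ((-2)*C*S)*a4) (((2)*C*S)*a3 + (C*C + (-1)*S*S)*a4) ((C*C + (1)*S*S)*a5) (((2)*C*S)*a1 + (C*C + (-1)*S*S)*a6) ((C*C + (1)*S*S)*a7).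
Proof. rewrite bop_1_6, bop_4_3. f_equal; ring. Qed.

Lemma stp10 F (HF : Spin7_invariant F) (p0 p1 p2 p3 p4 p5 p6 p7 x0 x1 x2 x3 x4 x5 x6 x7 : R) :
  TS7 (mk8 p0 p1 p2 p3 p4 p5 p6 p7) (mk8 x0 x1 x2 x3 x4 x5 x6 x7) -> Oinner (mk8 x0 x1 x2 x3 x4 x5 x6 x7) (mk8 x0 x1 x2 x3 x4 x5 x6 x7) = 1 -> p0 = 1 -> p1 = 0 -> p2 = 0 -> p3 = 0 -> p4 = 0 -> p5 = 0 -> p6 = 0 -> p7 = 0 -> x0 = 0 -> x2 = 0 -> x3 = 0 -> x4 = 0 ->
  exists q0 q1 q2 q3 q4 q5 q6 q7 y0 y1 y2 y3 y4 y5 y6 y7, TS7 (mk8 q0 q1 q2 q3 q4 q5 q6 q7) (mk8 y0 y1 y2 y3 y4 y5 y6 y7) /\ Oinner (mk8 y0 y1 y2 y3 y4 y5 y6 y7) (mk8 y0 y1 y2 y3 y4 y5 y6 y7) = 1 /\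
  F (mk8 p0 p1 p2 p3 p4 p5 p6 p7) (mk8 x0 x1 x2 x3 x4 x5 x6 x7) = F (mk8 q0 q1 q2 q3 q4 q5 q6 q7) (mk8 y0 y1 y2 y3 y4 y5 y6 y7) /\ q0 = 1 /\ q1 = 0 /\ q2 = 0 /\ q3 = 0 /\ q4 = 0 /\ q5 = 0 /\ q6 = 0 /\ q7 = 0 /\ y0 = 0 /\ y2 = 0 /\ y3 = 0 /\ y4 = 0 /\ y6 = 0.
Proof.
intros HT HU Hf0 Hf1 Hf2 Hf3 Hf4 Hf5 Hf6 Hf7 Hf8 Hf9 Hf10 Hf11.
destruct (rot_ex_p x1 x6) as (C & S & HCS & H0 & H1).
assert (Hv1 : imunit (vvec 1 6 (-C) S)) by (imu_solve C S HCS).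
assert (Hv2 : imunit (vvec 4 3 (-C) (-S))) by (imu_solve C S HCS).
destruct (move2 F HF (ebasis 1) (vvec 1 6 (-C) S) (ebasis 4) (vvec 4 3 (-C) (-S)) _ _ (imu_e 1 ltac:(lia)) Hv1 (imu_e 4 ltac:(lia)) Hv2 HT HU) as (E & HT' & HU').
rewrite (cmp10 C S p0 p1 p2 p3 p4 p5 p6 p7), (cmp10 C S x0 x1 x2 x3 x4 x5 x6 x7) in E. rewrite (cmp10 C S p0 p1 p2 p3 p4 p5 p6 p7), (cmp10 C S x0 x1 x2 x3 x4 x5 x6 x7) in HT'. rewrite (cmp10 C S x0 x1 x2 x3 x4 x5 x6 x7) in HU'.
exists ((C*C + (1)*S*S)*p0), ((C*C + (-1)*S*S)*p1 + ((-2)*C*S)*p6), ((C*C + (1)*S*S)*p2), ((C*C + (-1)*S*S)*p3 + ((-2)*C*S)*p4), (((2)*C*S)*p3 + (C*C + (-1)*S*S)*p4), ((C*C + (1)*S*S)*p5), (((2)*C*S)*p1 + (C*C + (-1)*S*S)*p6), ((C*C + (1)*S*S)*p7), ((C*C + (1)*S*S)*x0), ((C*C + (-1)*S*S)*x1 + ((-2)*C*S)*x6), ((C*C + (1)*S*S)*x2), ((C*C + (-1)*S*S)*x3 + ((-2)*C*S)*x4), (((2)*C*S)*x3 + (C*C + (-1)*S*S)*x4), ((C*C + (1)*S*S)*x5), (((2)*C*S)*x1 + (C*C + (-1)*S*S)*x6), ((C*C + (1)*S*S)*x7).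
refine (conj HT' (conj HU' (conj E _))).
subst.
split; [eapply one_by; [idtac | exact HCS]; ring |].
split; [ring |].
split; [ring |].
split; [ring |].
split; [ring |].
split; [ring |].
split; [ring |].
split; [ring |].
split; [ring |].
split; [ring |].
split; [ring |].
split; [ring |].
eapply zero_by; [idtac | exact H0]; ring.
Qed.

Lemma cmp11 (C S a0 a1 a2 a3 a4 a5 a6 a7 : R) :
  Bop (ebasis 2) (vvec 2 6 (-C) (-S)) (Bop (ebasis 1) (vvec 1 5 (-C) S) (mk8 a0 a1 a2 a3 a4 a5 a6 a7)) =
  mk8 ((C*C + (1)*S*S)*a0) ((C*C + (-1)*S*S)*a1 + ((-2)*C*S)*a5) ((C*C + (-1)*S*S)*a2 + ((2)*C*S)*a6) ((C*C + (1)*S*S)*a3) ((C*C + (1)*S*S)*a4) (((2)*C*S)*a1 + (C*C + (-1)*S*S)*a5) (((-2)*C*S)*a2 + (C*C + (-1)*S*S)*a6) ((C*C + (1)*S*S)*a7).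
Proof. rewrite bop_1_5, bop_2_6. f_equal; ring. Qed.

Lemma stp11 F (HF : Spin7_invariant F) (p0 p1 p2 p3 p4 p5 p6 p7 x0 x1 x2 x3 x4 x5 x6 x7 : R) :
  TS7 (mk8 p0 p1 p2 p3 p4 p5 p6 p7) (mk8 x0 x1 x2 x3 x4 x5 x6 x7) -> Oinner (mk8 x0 x1 x2 x3 x4 x5 x6 x7) (mk8 x0 x1 x2 x3 x4 x5 x6 x7) = 1 -> p0 = 1 -> p1 = 0 -> p2 = 0 -> p3 = 0 -> p4 = 0 -> p5 = 0 -> p6 = 0 -> p7 = 0 -> x0 = 0 -> x2 = 0 -> x3 = 0 -> x4 = 0 -> x6 = 0 ->
  exists q0 q1 q2 q3 q4 q5 q6 q7 y0 y1 y2 y3 y4 y5 y6 y7, TS7 (mk8 q0 q1 q2 q3 q4 q5 q6 q7) (mk8 y0 y1 y2 y3 y4 y5 y6 y7) /\ Oinner (mk8 y0 y1 y2 y3 y4 y5 y6 y7) (mk8 y0 y1 y2 y3 y4 y5 y6 y7) = 1 /\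
  F (mk8 p0 p1 p2 p3 p4 p5 p6 p7) (mk8 x0 x1 x2 x3 x4 x5 x6 x7) = F (mk8 q0 q1 q2 q3 q4 q5 q6 q7) (mk8 y0 y1 y2 y3 y4 y5 y6 y7) /\ q0 = 1 /\ q1 = 0 /\ q2 = 0 /\ q3 = 0 /\ q4 = 0 /\ q5 = 0 /\ q6 = 0 /\ q7 = 0 /\ y0 = 0 /\ y2 = 0 /\ y3 = 0 /\ y4 = 0 /\ y5 = 0 /\ y6 = 0.
Proof.
intros HT HU Hf0 Hf1 Hf2 Hf3 Hf4 Hf5 Hf6 Hf7 Hf8 Hf9 Hf10 Hf11 Hf12.
destruct (rot_ex_p x1 x5) as (C & S & HCS & H0 & H1).
assert (Hv1 : imunit (vvec 1 5 (-C) S)) by (imu_solve C S HCS).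
assert (Hv2 : imunit (vvec 2 6 (-C) (-S))) by (imu_solve C S HCS).
destruct (move2 F HF (ebasis 1) (vvec 1 5 (-C) S) (ebasis 2) (vvec 2 6 (-C) (-S)) _ _ (imu_e 1 ltac:(lia)) Hv1 (imu_e 2 ltac:(lia)) Hv2 HT HU) as (E & HT' & HU').
rewrite (cmp11 C S p0 p1 p2 p3 p4 p5 p6 p7), (cmp11 C S x0 x1 x2 x3 x4 x5 x6 x7) in E. rewrite (cmp11 C S p0 p1 p2 p3 p4 p5 p6 p7), (cmp11 C S x0 x1 x2 x3 x4 x5 x6 x7) in HT'. rewrite (cmp11 C S x0 x1 x2 x3 x4 x5 x6 x7) in HU'.
exists ((C*C + (1)*S*S)*p0), ((C*C + (-1)*S*S)*p1 + ((-2)*C*S)*p5), ((C*C + (-1)*S*S)*p2 + ((2)*C*S)*p6), ((C*C + (1)*S*S)*p3), ((C*C + (1)*S*S)*p4), (((2)*C*S)*p1 + (C*C + (-1)*S*S)*p5), (((-2)*C*S)*p2 + (C*C + (-1)*S*S)*p6), ((C*C + (1)*S*S)*p7), ((C*C + (1)*S*S)*x0), ((C*C + (-1)*S*S)*x1 + ((-2)*C*S)*x5), ((C*C + (-1)*S*S)*x2 + ((2)*C*S)*x6), ((C*C + (1)*S*S)*x3), ((C*C + (1)*S*S)*x4), (((2)*C*S)*x1 + (C*C + (-1)*S*S)*x5), (((-2)*C*S)*x2 + (C*C + (-1)*S*S)*x6), ((C*C + (1)*S*S)*x7).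
refine (conj HT' (conj HU' (conj E _))).
subst.
split; [eapply one_by; [idtac | exact HCS]; ring |].
split; [ring |].
split; [ring |].
split; [ring |].
split; [ring |].
split; [ring |].
split; [ring |].
split; [ring |].
split; [ring |].
split; [ring |].
split; [ring |].
split; [ring |].
split; [eapply zero_by; [idtac | exact H0]; ring |].
ring.
Qed.

Lemma cmp12 (C S a0 a1 a2 a3 a4 a5 a6 a7 : R) :
  Bop (ebasis 2) (vvec 2 4 (-C) (-S)) (Bop (ebasis 1) (vvec 1 7 (-C) S) (mk8 a0 a1 a2 a3 a4 a5 a6 a7)) =
  mk8 ((C*C + (1)*S*S)*a0) ((C*C + (-1)*S*S)*a1 + ((-2)*C*S)*a7) ((C*C + (-1)*S*S)*a2 + ((2)*C*S)*a4) ((C*C + (1)*S*S)*a3) (((-2)*C*S)*a2 + (C*C + (-1)*S*S)*a4) ((C*C + (1)*S*S)*a5) ((C*C + (1)*S*S)*a6) (((2)*C*S)*a1 + (C*C + (-1)*S*S)*a7).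
Proof. rewrite bop_1_7, bop_2_4. f_equal; ring. Qed.

Lemma stp12 F (HF : Spin7_invariant F) (p0 p1 p2 p3 p4 p5 p6 p7 x0 x1 x2 x3 x4 x5 x6 x7 : R) :
  TS7 (mk8 p0 p1 p2 p3 p4 p5 p6 p7) (mk8 x0 x1 x2 x3 x4 x5 x6 x7) -> Oinner (mk8 x0 x1 x2 x3 x4 x5 x6 x7) (mk8 x0 x1 x2 x3 x4 x5 x6 x7) = 1 -> p0 = 1 -> p1 = 0 -> p2 = 0 -> p3 = 0 -> p4 = 0 -> p5 = 0 -> p6 = 0 -> p7 = 0 -> x0 = 0 -> x2 = 0 -> x3 = 0 -> x4 = 0 -> x5 = 0 -> x6 = 0 ->
  exists q0 q1 q2 q3 q4 q5 q6 q7 y0 y1 y2 y3 y4 y5 y6 y7, TS7 (mk8 q0 q1 q2 q3 q4 q5 q6 q7) (mk8 y0 y1 y2 y3 y4 y5 y6 y7) /\ Oinner (mk8 y0 y1 y2 y3 y4 y5 y6 y7) (mk8 y0 y1 y2 y3 y4 y5 y6 y7) = 1 /\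
  F (mk8 p0 p1 p2 p3 p4 p5 p6 p7) (mk8 x0 x1 x2 x3 x4 x5 x6 x7) = F (mk8 q0 q1 q2 q3 q4 q5 q6 q7) (mk8 y0 y1 y2 y3 y4 y5 y6 y7) /\ q0 = 1 /\ q1 = 0 /\ q2 = 0 /\ q3 = 0 /\ q4 = 0 /\ q5 = 0 /\ q6 = 0 /\ q7 = 0 /\ y0 = 0 /\ y2 = 0 /\ y3 = 0 /\ y4 = 0 /\ y5 = 0 /\ y6 = 0 /\ y7 = 0 /\ 0 <= y1.
Proof.
intros HT HU Hf0 Hf1 Hf2 Hf3 Hf4 Hf5 Hf6 Hf7 Hf8 Hf9 Hf10 Hf11 Hf12 Hf13.
destruct (rot_ex_p x1 x7) as (C & S & HCS & H0 & H1).
assert (Hv1 : imunit (vvec 1 7 (-C) S)) by (imu_solve C S HCS).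
assert (Hv2 : imunit (vvec 2 4 (-C) (-S))) by (imu_solve C S HCS).
destruct (move2 F HF (ebasis 1) (vvec 1 7 (-C) S) (ebasis 2) (vvec 2 4 (-C) (-S)) _ _ (imu_e 1 ltac:(lia)) Hv1 (imu_e 2 ltac:(lia)) Hv2 HT HU) as (E & HT' & HU').
rewrite (cmp12 C S p0 p1 p2 p3 p4 p5 p6 p7), (cmp12 C S x0 x1 x2 x3 x4 x5 x6 x7) in E. rewrite (cmp12 C S p0 p1 p2 p3 p4 p5 p6 p7), (cmp12 C S x0 x1 x2 x3 x4 x5 x6 x7) in HT'. rewrite (cmp12 C S x0 x1 x2 x3 x4 x5 x6 x7) in HU'.
exists ((C*C + (1)*S*S)*p0), ((C*C + (-1)*S*S)*p1 + ((-2)*C*S)*p7), ((C*C + (-1)*S*S)*p2 + ((2)*C*S)*p4), ((C*C + (1)*S*S)*p3), (((-2)*C*S)*p2 + (C*C + (-1)*S*S)*p4), ((C*C + (1)*S*S)*p5), ((C*C + (1)*S*S)*p6), (((2)*C*S)*p1 + (C*C + (-1)*S*S)*p7), ((C*C + (1)*S*S)*x0), ((C*C + (-1)*S*S)*x1 + ((-2)*C*S)*x7), ((C*C + (-1)*S*S)*x2 + ((2)*C*S)*x4), ((C*C + (1)*S*S)*x3), (((-2)*C*S)*x2 + (C*C + (-1)*S*S)*x4), ((C*C + (1)*S*S)*x5), ((C*C + (1)*S*S)*x6), (((2)*C*S)*x1 + (C*C + (-1)*S*S)*x7).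
refine (conj HT' (conj HU' (conj E _))).
subst.
split; [eapply one_by; [idtac | exact HCS]; ring |].
split; [ring |].
split; [ring |].
split; [ring |].
split; [ring |].
split; [ring |].
split; [ring |].
split; [ring |].
split; [ring |].
split; [ring |].
split; [ring |].
split; [ring |].
split; [ring |].
split; [ring |].
split; [eapply zero_by; [idtac | exact H0]; ring |].
eapply le_by; [idtac | exact H1]; ring.
Qed.

Lemma chain F (HF : Spin7_invariant F) (p0 p1 p2 p3 p4 p5 p6 p7 x0 x1 x2 x3 x4 x5 x6 x7 : R) :
  TS7 (mk8 p0 p1 p2 p3 p4 p5 p6 p7) (mk8 x0 x1 x2 x3 x4 x5 x6 x7) -> Oinner (mk8 x0 x1 x2 x3 x4 x5 x6 x7) (mk8 x0 x1 x2 x3 x4 x5 x6 x7) = 1 ->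
  F (mk8 p0 p1 p2 p3 p4 p5 p6 p7) (mk8 x0 x1 x2 x3 x4 x5 x6 x7) = F (mk8 1 0 0 0 0 0 0 0) (mk8 0 1 0 0 0 0 0 0).
Proof.
intros HT HU.
destruct (stp0 F HF p0 p1 p2 p3 p4 p5 p6 p7 x0 x1 x2 x3 x4 x5 x6 x7 HT HU ) as (P0_0 & P0_1 & P0_2 & P0_3 & P0_4 & P0_5 & P0_6 & P0_7 & X0_0 & X0_1 & X0_2 & X0_3 & X0_4 & X0_5 & X0_6 & X0_7 & HT0 & HU0 & E0 & Z0_zp1).
rewrite E0. clear HT HU E0. rename HT0 into HT. rename HU0 into HU.
destruct (stp1 F HF P0_0 P0_1 P0_2 P0_3 P0_4 P0_5 P0_6 P0_7 X0_0 X0_1 X0_2 X0_3 X0_4 X0_5 X0_6 X0_7 HT HU Z0_zp1) as (P1_0 & P1_1 & P1_2 & P1_3 & P1_4 & P1_5 & P1_6 & P1_7 & X1_0 & X1_1 & X1_2 & X1_3 & X1_4 & X1_5 & X1_6 & X1_7 & HT1 & HU1 & E1 & Z1_zp1 & Z1_zp2).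
rewrite E1. clear HT HU E1. rename HT1 into HT. rename HU1 into HU.
destruct (stp2 F HF P1_0 P1_1 P1_2 P1_3 P1_4 P1_5 P1_6 P1_7 X1_0 X1_1 X1_2 X1_3 X1_4 X1_5 X1_6 X1_7 HT HU Z1_zp1 Z1_zp2) as (P2_0 & P2_1 & P2_2 & P2_3 & P2_4 & P2_5 & P2_6 & P2_7 & X2_0 & X2_1 & X2_2 & X2_3 & X2_4 & X2_5 & X2_6 & X2_7 & HT2 & HU2 & E2 & Z2_zp1 & Z2_zp2 & Z2_zp3).
rewrite E2. clear HT HU E2. rename HT2 into HT. rename HU2 into HU.
destruct (stp3 F HF P2_0 P2_1 P2_2 P2_3 P2_4 P2_5 P2_6 P2_7 X2_0 X2_1 X2_2 X2_3 X2_4 X2_5 X2_6 X2_7 HT HU Z2_zp1 Z2_zp2 Z2_zp3) as (P3_0 & P3_1 & P3_2 & P3_3 & P3_4 & P3_5 & P3_6 & P3_7 & X3_0 & X3_1 & X3_2 & X3_3 & X3_4 & X3_5 & X3_6 & X3_7 & HT3 & HU3 & E3 & Z3_zp1 & Z3_zp2 & Z3_zp3 & Z3_zp4).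
rewrite E3. clear HT HU E3. rename HT3 into HT. rename HU3 into HU.
destruct (stp4 F HF P3_0 P3_1 P3_2 P3_3 P3_4 P3_5 P3_6 P3_7 X3_0 X3_1 X3_2 X3_3 X3_4 X3_5 X3_6 X3_7 HT HU Z3_zp1 Z3_zp2 Z3_zp3 Z3_zp4) as (P4_0 & P4_1 & P4_2 & P4_3 & P4_4 & P4_5 & P4_6 & P4_7 & X4_0 & X4_1 & X4_2 & X4_3 & X4_4 & X4_5 & X4_6 & X4_7 & HT4 & HU4 & E4 & Z4_zp1 & Z4_zp2 & Z4_zp3 & Z4_zp4 & Z4_zp5).
rewrite E4. clear HT HU E4. rename HT4 into HT. rename HU4 into HU.
destruct (stp5 F HF P4_0 P4_1 P4_2 P4_3 P4_4 P4_5 P4_6 P4_7 X4_0 X4_1 X4_2 X4_3 X4_4 X4_5 X4_6 X4_7 HT HU Z4_zp1 Z4_zp2 Z4_zp3 Z4_zp4 Z4_zp5) as (P5_0 & P5_1 & P5_2 & P5_3 & P5_4 & P5_5 & P5_6 & P5_7 & X5_0 & X5_1 & X5_2 & X5_3 & X5_4 & X5_5 & X5_6 & X5_7 & HT5 & HU5 & E5 & Z5_zp1 & Z5_zp2 & Z5_zp3 & Z5_zp4 & Z5_zp5 & Z5_zp6).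
rewrite E5. clear HT HU E5. rename HT5 into HT. rename HU5 into HU.
destruct (stp6 F HF P5_0 P5_1 P5_2 P5_3 P5_4 P5_5 P5_6 P5_7 X5_0 X5_1 X5_2 X5_3 X5_4 X5_5 X5_6 X5_7 HT HU Z5_zp1 Z5_zp2 Z5_zp3 Z5_zp4 Z5_zp5 Z5_zp6) as (P6_0 & P6_1 & P6_2 & P6_3 & P6_4 & P6_5 & P6_6 & P6_7 & X6_0 & X6_1 & X6_2 & X6_3 & X6_4 & X6_5 & X6_6 & X6_7 & HT6 & HU6 & E6 & Z6_zp1 & Z6_zp2 & Z6_zp3 & Z6_zp4 & Z6_zp5 & Z6_zp6 & Z6_zp7 & Pos6).
rewrite E6. clear HT HU E6. rename HT6 into HT. rename HU6 into HU.
destruct (mid P6_0 P6_1 P6_2 P6_3 P6_4 P6_5 P6_6 P6_7 X6_0 X6_1 X6_2 X6_3 X6_4 X6_5 X6_6 X6_7 HT Z6_zp1 Z6_zp2 Z6_zp3 Z6_zp4 Z6_zp5 Z6_zp6 Z6_zp7 Pos6) as (M1 & M2).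
destruct (stp7 F HF P6_0 P6_1 P6_2 P6_3 P6_4 P6_5 P6_6 P6_7 X6_0 X6_1 X6_2 X6_3 X6_4 X6_5 X6_6 X6_7 HT HU M1 Z6_zp1 Z6_zp2 Z6_zp3 Z6_zp4 Z6_zp5 Z6_zp6 Z6_zp7 M2) as (P7_0 & P7_1 & P7_2 & P7_3 & P7_4 & P7_5 & P7_6 & P7_7 & X7_0 & X7_1 & X7_2 & X7_3 & X7_4 & X7_5 & X7_6 & X7_7 & HT7 & HU7 & E7 & Z7_onep0 & Z7_zp1 & Z7_zp2 & Z7_zp3 & Z7_zp4 & Z7_zp5 & Z7_zp6 & Z7_zp7 & Z7_zx0 & Z7_zx2).
rewrite E7. clear HT HU E7. rename HT7 into HT. rename HU7 into HU.
destruct (stp8 F HF P7_0 P7_1 P7_2 P7_3 P7_4 P7_5 P7_6 P7_7 X7_0 X7_1 X7_2 X7_3 X7_4 X7_5 X7_6 X7_7 HT HU Z7_onep0 Z7_zp1 Z7_zp2 Z7_zp3 Z7_zp4 Z7_zp5 Z7_zp6 Z7_zp7 Z7_zx0 Z7_zx2) as (P8_0 & P8_1 & P8_2 & P8_3 & P8_4 & P8_5 & P8_6 & P8_7 & X8_0 & X8_1 & X8_2 & X8_3 & X8_4 & X8_5 & X8_6 & X8_7 & HT8 & HU8 & E8 & Z8_onep0 & Z8_zp1 & Z8_zp2 & Z8_zp3 & Z8_zp4 & Z8_zp5 & Z8_zp6 & Z8_zp7 & Z8_zx0 & Z8_zx2 & Z8_zx3).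
rewrite E8. clear HT HU E8. rename HT8 into HT. rename HU8 into HU.
destruct (stp9 F HF P8_0 P8_1 P8_2 P8_3 P8_4 P8_5 P8_6 P8_7 X8_0 X8_1 X8_2 X8_3 X8_4 X8_5 X8_6 X8_7 HT HU Z8_onep0 Z8_zp1 Z8_zp2 Z8_zp3 Z8_zp4 Z8_zp5 Z8_zp6 Z8_zp7 Z8_zx0 Z8_zx2 Z8_zx3) as (P9_0 & P9_1 & P9_2 & P9_3 & P9_4 & P9_5 & P9_6 & P9_7 & X9_0 & X9_1 & X9_2 & X9_3 & X9_4 & X9_5 & X9_6 & X9_7 & HT9 & HU9 & E9 & Z9_onep0 & Z9_zp1 & Z9_zp2 & Z9_zp3 & Z9_zp4 & Z9_zp5 & Z9_zp6 & Z9_zp7 & Z9_zx0 & Z9_zx2 & Z9_zx3 & Z9_zx4).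
rewrite E9. clear HT HU E9. rename HT9 into HT. rename HU9 into HU.
destruct (stp10 F HF P9_0 P9_1 P9_2 P9_3 P9_4 P9_5 P9_6 P9_7 X9_0 X9_1 X9_2 X9_3 X9_4 X9_5 X9_6 X9_7 HT HU Z9_onep0 Z9_zp1 Z9_zp2 Z9_zp3 Z9_zp4 Z9_zp5 Z9_zp6 Z9_zp7 Z9_zx0 Z9_zx2 Z9_zx3 Z9_zx4) as (P10_0 & P10_1 & P10_2 & P10_3 & P10_4 & P10_5 & P10_6 & P10_7 & X10_0 & X10_1 & X10_2 & X10_3 & X10_4 & X10_5 & X10_6 & X10_7 & HT10 & HU10 & E10 & Z10_onep0 & Z10_zp1 & Z10_zp2 & Z10_zp3 & Z10_zp4 & Z10_zp5 & Z10_zp6 & Z10_zp7 & Z10_zx0 & Z10_zx2 & Z10_zx3 & Z10_zx4 & Z10_zx6).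
rewrite E10. clear HT HU E10. rename HT10 into HT. rename HU10 into HU.
destruct (stp11 F HF P10_0 P10_1 P10_2 P10_3 P10_4 P10_5 P10_6 P10_7 X10_0 X10_1 X10_2 X10_3 X10_4 X10_5 X10_6 X10_7 HT HU Z10_onep0 Z10_zp1 Z10_zp2 Z10_zp3 Z10_zp4 Z10_zp5 Z10_zp6 Z10_zp7 Z10_zx0 Z10_zx2 Z10_zx3 Z10_zx4 Z10_zx6) as (P11_0 & P11_1 & P11_2 & P11_3 & P11_4 & P11_5 & P11_6 & P11_7 & X11_0 & X11_1 & X11_2 & X11_3 & X11_4 & X11_5 & X11_6 & X11_7 & HT11 & HU11 & E11 & Z11_onep0 & Z11_zp1 & Z11_zp2 & Z11_zp3 & Z11_zp4 & Z11_zp5 & Z11_zp6 & Z11_zp7 & Z11_zx0 & Z11_zx2 & Z11_zx3 & Z11_zx4 & Z11_zx5 & Z11_zx6).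
rewrite E11. clear HT HU E11. rename HT11 into HT. rename HU11 into HU.
destruct (stp12 F HF P11_0 P11_1 P11_2 P11_3 P11_4 P11_5 P11_6 P11_7 X11_0 X11_1 X11_2 X11_3 X11_4 X11_5 X11_6 X11_7 HT HU Z11_onep0 Z11_zp1 Z11_zp2 Z11_zp3 Z11_zp4 Z11_zp5 Z11_zp6 Z11_zp7 Z11_zx0 Z11_zx2 Z11_zx3 Z11_zx4 Z11_zx5 Z11_zx6) as (P12_0 & P12_1 & P12_2 & P12_3 & P12_4 & P12_5 & P12_6 & P12_7 & X12_0 & X12_1 & X12_2 & X12_3 & X12_4 & X12_5 & X12_6 & X12_7 & HT12 & HU12 & E12 & Z12_onep0 & Z12_zp1 & Z12_zp2 & Z12_zp3 & Z12_zp4 & Z12_zp5 & Z12_zp6 & Z12_zp7 & Z12_zx0 & Z12_zx2 & Z12_zx3 & Z12_zx4 & Z12_zx5 & Z12_zx6 & Z12_zx7 & Pos12).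
rewrite E12. clear HT HU E12. rename HT12 into HT. rename HU12 into HU.
pose proof (fin P12_0 P12_1 P12_2 P12_3 P12_4 P12_5 P12_6 P12_7 X12_0 X12_1 X12_2 X12_3 X12_4 X12_5 X12_6 X12_7 HT HU Z12_zp1 Z12_zp2 Z12_zp3 Z12_zp4 Z12_zp5 Z12_zp6 Z12_zp7 Z12_onep0 Z12_zx0 Z12_zx2 Z12_zx3 Z12_zx4 Z12_zx5 Z12_zx6 Z12_zx7 Pos12) as F1.
rewrite F1. rewrite Z12_zp1 , Z12_zp2 , Z12_zp3 , Z12_zp4 , Z12_zp5 , Z12_zp6 , Z12_zp7 , Z12_onep0 , Z12_zx0 , Z12_zx2 , Z12_zx3 , Z12_zx4 , Z12_zx5 , Z12_zx6 , Z12_zx7. reflexivity.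
Qed.


Lemma Fconst F (HF : Spin7_invariant F) p x : TS7 p x -> Oinner x x = 1 ->
  F p x = F (mk8 1 0 0 0 0 0 0 0) (mk8 0 1 0 0 0 0 0 0).
Proof. intros HT HU. dO p; dO x. exact (chain F HF _ _ _ _ _ _ _ _ _ _ _ _ _ _ _ _ HT HU). Qed.

Lemma inner_scale (k : R) (v : Oct) : Oinner (Oscale k v) (Oscale k v) = k * k * Oinner v v.
Proof. rewrite !Oinner_sum. dO v. os. ring. Qed.
Lemma inner_scale_r (k : R) (p v : Oct) : Oinner p (Oscale k v) = k * Oinner p v.
Proof. rewrite !Oinner_sum. dO p; dO v. os. ring. Qed.
Lemma inner_nonneg (v : Oct) : 0 <= Oinner v v.
Proof. rewrite Oinner_sum. dO v. os. nra. Qed.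

Lemma zero_vec (v : Oct) : Oinner v v = 0 -> Oscale 2 v = v.
Proof. rewrite Oinner_sum. dO v. os. intro Z.
assert (q0 = 0) by nra. assert (q1 = 0) by nra. assert (q2 = 0) by nra. assert (q3 = 0) by nra.
assert (q4 = 0) by nra. assert (q5 = 0) by nra. assert (q6 = 0) by nra. assert (q7 = 0) by nra.
subst. apply Oeq; os; ring. Qed.

Theorem mainTheorem5 (F : Oct -> Oct -> R) (X : Tri) :
  FinslerS7 F ->
  Spin7_invariant F ->
  LieSpin7 X ->
  TriNonzero X ->
  constant_length F X ->
  exists c : R, 0 < c /\
    forall p v : Oct, TS7 p v -> F p v = c * Onorm v.
Proof.
intros HFin HF _ _ _.
destruct HFin as (Hcont & Hnn & Hsm & Hpos & Hhom & Hhess).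
exists (F (mk8 1 0 0 0 0 0 0 0) (mk8 0 1 0 0 0 0 0 0)). split.
- apply Hpos.
  + split; unfold onS7; rewrite Oinner_sum; unfold mk8; os; ring.
  + intro H. unfold Ozero, Oof, mk8 in H. injection H. intros. lra.
- intros p v HT.
  destruct (Req_dec (Oinner v v) 0) as [Z|NZ].
  + assert (E := Hhom p v 2 HT ltac:(lra)). rewrite (zero_vec v Z) in E.
    unfold Onorm. rewrite Z, sqrt_0. lra.
  + assert (Hpos' : 0 < Oinner v v) by (pose proof (inner_nonneg v); lra).
    set (n := Onorm v).
    assert (Hn : 0 < n) by (unfold n, Onorm; apply sqrt_lt_R0; exact Hpos').
    assert (Hnn' : n * n = Oinner v v) by (unfold n, Onorm; apply sqrt_sqrt; lra).
    set (x := Oscale (/ n) v).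
    assert (Hx1 : Oinner x x = 1).
    { unfold x. rewrite inner_scale, <- Hnn'. field. lra. }
    assert (HTx : TS7 p x).
    { destruct HT as [H1 H2]. split; [exact H1|]. unfold x. rewrite inner_scale_r, H2. ring. }
    assert (Ev : Oscale n x = v).
    { unfold x. rewrite scale_scale, Rinv_r by lra. apply scale_one. }
    rewrite <- Ev at 1. rewrite (Hhom p x n HTx Hn). rewrite (Fconst F HF p x HTx Hx1). ring.
Qed.
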